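(* Let $\mathcal{R}$ be a left-linear conditional term rewriting system, $\mathcal{A}$ a lattice tree automaton and $E$ a set of linear (approximation) equations. If the completion of $\mathcal{A}$ by $\mathcal{R}$ and $E$ terminates on an automaton $\mathcal{A}^*_{\mathcal{R},E}$, then $\mathcal{L}(\mathcal{A}^*_{\mathcal{R},E})\supseteq\mathcal{R}^*(\mathcal{L}(\mathcal{A}))$.
   Context: Domains and terms. A concrete domain $\mathcal{D}$ with interpreted symbols $\mathcal{F}_\bullet=\mathcal{D}\cup OP$ (elements of $\mathcal{D}$ as constants, operations $OP$ on $\mathcal{D}$) and passive (uninterpreted) symbols $\mathcal{F}_\circ$; $eval$ simplifies terms over $\mathcal{F}_\bullet$ to elements of $\mathcal{D}$ and extends homomorphically to other terms. The concrete domain is abstracted (Galois connection, abstraction $\alpha$) by an atomic lattice $\Lambda$, whose atoms correspond to concrete values; abstract interpreted symbols are $\mathcal{F}_\bullet^{\#}=\Lambda\cup OP^{\#}\cup\{\sqcup,\sqcap\}$ with abstract evaluation into $\Lambda$. Lattice tree automaton (LTA) $\langle\mathcal{F},\mathcal{Q},\mathcal{Q}_f,\Delta\rangle$, $\mathcal{F}=\mathcal{F}_\circ\cup\mathcal{F}_\bullet^{\#}$: finite states, final states, normalized transitions $f(q_1,\dots,q_n)\to q$ including lambda transitions $\lambda\to q$ ($\lambda\in\Lambda$). Runs: a subterm over interpreted symbols whose evaluation is $\sqsubseteq\lambda$ reduces to $q$ if $\lambda\to q\in\Delta$; $f(q_1..q_n)\to q$ rewrites as usual. The term order $\sqsubseteq$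 compares interpreted subterms by evaluation and passive symbols structurally. $\mathcal{L}(\mathcal{A},q)$: ground terms $t$ (passive symbols, operations, atoms of $\Lambda$) such that some $t'\sqsupseteq t$ satisfies $t'\to^*_{\mathcal{A}}q$; $\mathcal{L}(\mathcal{A})$ the union over final states. Conditional TRS. Rules $l\to r\Leftarrow c_1\wedge\dots\wedge c_n$ with $l$ a non-variable term over passive symbols and variables, $r$ a term over $\mathcal{F}_\circ\cup\mathcal{F}_\bullet$ and variables, $\mathit{Var}(r)\subseteq\mathit{Var}(l)$, each $c_i=\rho_i(t_1,\dots,t_m)$ with $\rho_i$ a predicate on $\mathcal{D}^m$ and $t_j$ terms over interpreted symbols and variables of $l$; a predicate evaluates its arguments with $eval$ and is false if some argument is not a term over interpreted symbols. Left-linear: each variable occurs at most once in $l$. Rewriting: $s\to_{\mathcal{R}}t$ iff there are a rule, a position $p$ and a ground substitution $\sigma$ with $s|_p=l\sigma$, all $c_i\sigma$ true, and $t=eval(s[r\sigma]_p)$. $\mathcal{R}^*(L)$ is the set of terms reachable from $L$ by $\to^*_{\mathcal{R}}$. Completion. For a rule $rl=l\to r\Leftarrow c$ and state $q$: $Matching(l,\mathcal{A},q)$ returns the substitutions $\sigma$ from variables to states with $l\sigma\to^*_{\mathcal{A}}q$; a solver $Solve(\sigma,\mathcal{A},c)$ restricts the constrained variables to lattice elements, over-approximating the solutions of $c$; $\Omega(\mathcal{A},rl,q)=\{\sigma'\mid\sigma\in Matching(l,\mathcal{A},q),\ \sigma'\in Solve(\sigma,\mathcal{A},c),\ \nexists\sigma'':\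 r\sigma'\sqsubseteq r\sigma''\to^*_{\mathcal{A}}q\}$. $Norm(s\to^*q)$ turns $s\to q$ into normalized transitions (concrete constants $d$ become $\alpha(d)\to q$, subterms get existing states recognizing them or new states). The one-step completed automaton ${\cal C}_{\mathcal{R}}(\mathcal{A})$ adds, for every rule, state $q$ and $\sigma\in\Omega(\mathcal{A},rl,q)$, the transitions $Norm(r\sigma\to^* q')\cup\{q'\to q\}$ with $q'$ a new state. $\leadsto^!_E$ merges (replacing one state by the other everywhere) any states $q,q'$ such that for some equation $u=v\Leftarrow c$ of $E$ and substitution $\sigma$, $u\sigma\to^*q$, $v\sigma\to^*q'$ and $c$ is satisfiable. $eval(\mathcal{A})$ closes the transition set under the rule: if $f(q_1..q_k)\to q$ with $f$ an interpreted operation and $\lambda_i\to^* q_i$, add $eval(f(\lambda_1..\lambda_k))\to q$ unless some $\lambda\to q$ already covers it (a widening operator on $\Lambda$ may be used to make this terminate, which only enlarges lattice elements). The completion sequence is $\mathcal{A}^0_{\mathcal{R},E}=\mathcal{A}$, and $\mathcal{A}^{n+1}_{\mathcal{R},E}=eval(\mathcal{A}'')$ where ${\cal C}_{\mathcal{R}}(eval(\mathcal{A}^n_{\mathcal{R},E}))\leadsto^!_E\mathcal{A}''$; completion terminates if $\mathcal{A}^{k+1}_{\mathcal{R},E}=\mathcal{A}^k_{\mathcal{R},E}$ for some $k$, and then $\mathcal{A}^*_{\mathcal{R},E}=\mathcal{A}^k_{\mathcal{R},E}$. *)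

(* Defs.v *)
From HB Require Import structures.
From mathcomp Require Import all_boot all_order.
From Stdlib Require List.

Set Implicit Arguments.
Unset Strict Implicit.
Unset Printing Implicit Defensive.

Import Order.Theory.
Local Open Scope order_scope.

Definition is_atom (disp : Order.disp_t) (L : bLatticeType disp) (a : L) : Prop :=
  a != \bot /\ forall b : L, b <= a -> b = \bot \/ b = a.

Record domain : Type := Domain {
  passive : Type;
  arP : passive -> nat;
  dval : Type;
  oper : Type;
  arO : oper -> nat;
  opsem : oper -> seq dval -> dval (* semantics, used at the right arity *)
}.

Record absdom (Dm : domain) : Type := AbsDom {
  adisp : Order.disp_t;
  lat : bLatticeType adisp;
  alpha : (dval Dm -> Prop) -> lat;
  gamma : lat -> dval Dm -> Prop;
  opA : oper Dm -> seq lat -> lat;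
  galois : forall (X : dval Dm -> Prop) (l : lat),
      alpha X <= l <-> (forall d, X d -> gamma l d);
  atomic : forall l : lat, l != \bot -> exists a, is_atom a /\ a <= l;
  alpha_atom : forall d, is_atom (alpha (fun x => x = d));
  atom_alpha : forall a : lat, is_atom a -> exists d, a = alpha (fun x => x = d);
  alpha_inj : forall d d', alpha (fun x => x = d) = alpha (fun x => x = d') -> d = d';
  opA_sound : forall o (ds : seq (dval Dm)) (ls : seq lat),
      size ls = arO o -> List.Forall2 (fun d l => gamma l d) ds ls ->
      gamma (opA o ls) (opsem o ds)
}.

(* Generic terms: variables/states (nat), passive symbols, (interpreted)
   operation symbols, constants.                                       *)
Inductive term (F K O : Type) : Type :=
| TVar (x : nat)
| TPas (f : F) (ts : seq (term F K O))
| TOp (o : O) (ts : seq (term F K O))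
| TCst (k : K).
Arguments TVar {F K O}.
Arguments TPas {F K O}.
Arguments TOp {F K O}.
Arguments TCst {F K O}.

Fixpoint vars F K O (t : term F K O) : seq nat :=
  match t with
  | TVar x => [:: x]
  | TPas _ ts => flatten (map (@vars F K O) ts)
  | TOp _ ts => flatten (map (@vars F K O) ts)
  | TCst _ => [::]
  end.

Definition ground F K O (t : term F K O) : Prop := vars t = [::].

Fixpoint tsub F K O (g : nat -> term F K O) (t : term F K O) : term F K O :=
  match t with
  | TVar x => g x
  | TPas f ts => TPas f (map (tsub g) ts)
  | TOp o ts => TOp o (map (tsub g) ts)
  | TCst k => TCst k
  end.

Fixpoint tmap F K O K' O' (fk : K -> K') (fo : O -> O') (t : term F K O)
  : term F K' O' :=
  match t with
  | TVar x => TVar x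
  | TPas f ts => TPas f (map (tmap fk fo) ts)
  | TOp o ts => TOp (fo o) (map (tmap fk fo) ts)
  | TCst k => TCst (fk k)
  end.

Fixpoint wf F K O (arF : F -> nat) (arOp : O -> nat) (t : term F K O) : bool :=
  match t with
  | TVar _ => true
  | TPas f ts => (size ts == arF f) && all (wf arF arOp) ts
  | TOp o ts => (size ts == arOp o) && all (wf arF arOp) ts
  | TCst _ => true
  end.

Fixpoint passive_only F K O (t : term F K O) : bool :=
  match t with
  | TVar _ => true
  | TPas _ ts => all (@passive_only F K O) ts
  | _ => false
  end.

Fixpoint no_passive F K O (t : term F K O) : bool :=
  match t with
  | TPas _ _ => false
  | TOp _ ts => all (@no_passive F K O) ts
  | _ => true
  end.

Definition is_var F K O (t : term F K O) : bool :=
  if t is TVar _ then true else false.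

Inductive at_pos F K O (P : term F K O -> term F K O -> Prop)
  : term F K O -> term F K O -> Prop :=
| at_root s t : P s t -> at_pos P s t
| at_pas f l1 s t l2 : at_pos P s t ->
    at_pos P (TPas f (l1 ++ s :: l2)) (TPas f (l1 ++ t :: l2))
| at_op o l1 s t l2 : at_pos P s t ->
    at_pos P (TOp o (l1 ++ s :: l2)) (TOp o (l1 ++ t :: l2)).

Inductive star (T : Type) (R : T -> T -> Prop) : T -> T -> Prop :=
| star_refl x : star R x x
| star_step x y z : R x y -> star R y z -> star R x z.

Fixpoint all_some (T : Type) (s : seq (option T)) : option (seq T) :=
  match s with
  | [::] => Some [::]
  | Some x :: s' => if all_some s' is Some l then Some (x :: l) else None
  | None :: _ => None
  end.

Section Completion.

Variable Dm : domain.

Definition cterm := term (passive Dm) (dval Dm) (oper Dm).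

Definition wfc (t : cterm) : bool := wf (@arP Dm) (@arO Dm) t.

Definition get_cst (t : cterm) : option (dval Dm) :=
  if t is TCst d then Some d else None.

Fixpoint ceval (t : cterm) : cterm :=
  match t with
  | TVar x => TVar x
  | TPas f ts => TPas f (map ceval ts)
  | TOp o ts =>
      let ts' := map ceval ts in
      match all_some (map get_cst ts') with
      | Some ds => if size ds == arO o then TCst (opsem o ds) else TOp o ts'
      | None => TOp o ts'
      end
  | TCst d => TCst d
  end.

Record constr : Type := Constr {
  cpred : seq (dval Dm) -> Prop;
  cargs : seq cterm
}.

Record rule : Type := Rule { lhs : cterm; rhs : cterm; conds : seq constr }.

Record approx_eq : Type := ApproxEq { eq_l : cterm; eq_r : cterm; eq_c : seq constr }.

(* a predicate evaluates its arguments; false if one is not interpreted *)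
Definition cond_holds (th : nat -> cterm) (c : constr) : Prop :=
  exists ds, List.Forall2 (fun a d => ceval (tsub th a) = TCst d) (cargs c) ds
             /\ cpred c ds.

Definition cvars (cs : seq constr) : seq nat :=
  flatten (map (fun c => flatten (map (@vars _ _ _) (cargs c))) cs).

Definition rule_ok (rl : rule) : Prop :=
  ~~ is_var (lhs rl) /\ passive_only (lhs rl) /\
  wfc (lhs rl) /\ wfc (rhs rl) /\
  {subset vars (rhs rl) <= vars (lhs rl)} /\
  (forall c, List.In c (conds rl) -> forall a, List.In a (cargs c) ->
      no_passive a /\ wfc a /\ {subset vars a <= vars (lhs rl)}).

Definition left_linear_ctrs (R : seq rule) : Prop :=
  forall rl, List.In rl R -> rule_ok rl /\ uniq (vars (lhs rl)).

Definition linear_eqs (E : seq approx_eq) : Prop :=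
  forall e, List.In e E ->
    wfc (eq_l e) /\ wfc (eq_r e) /\ uniq (vars (eq_l e)) /\ uniq (vars (eq_r e)).

Definition rew_root (R : seq rule) (s t : cterm) : Prop :=
  exists rl th, List.In rl R /\ (forall x, ground (th x)) /\
    s = tsub th (lhs rl) /\ List.Forall (cond_holds th) (conds rl) /\
    t = tsub th (rhs rl).

Definition ctrs_step (R : seq rule) (s t : cterm) : Prop :=
  exists u, at_pos (rew_root R) s u /\ t = ceval u.

Definition reach (R : seq rule) (L : cterm -> Prop) (t : cterm) : Prop :=
  exists s, L s /\ star (ctrs_step R) s t.

Variable Ab : absdom Dm.
Local Notation Lam := (lat Ab).

Definition alpha1 (d : dval Dm) : Lam := alpha Ab (fun x => x = d).

Inductive aop : Type := AO (o : oper Dm) | AJoin | AMeet.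

Definition arA (o : aop) : nat :=
  match o with AO o' => arO o' | _ => 2 end.

Definition aterm := term (passive Dm) Lam aop.

Definition wfa (t : aterm) : bool := wf (@arP Dm) arA t.

Definition aeval_op (o : aop) (ls : seq Lam) : option Lam :=
  match o, ls with
  | AO o', _ => if size ls == arO o' then Some (opA o' ls) else None
  | AJoin, [:: a; b] => Some (a `|` b)
  | AMeet, [:: a; b] => Some (a `&` b)
  | _, _ => None
  end.

Fixpoint aeval (t : aterm) : option Lam :=
  match t with
  | TCst l => Some l
  | TOp o ts => obind (aeval_op o) (all_some (map aeval ts))
  | _ => None
  end.

Definition abs (t : cterm) : aterm := tmap alpha1 AO t.

Inductive cleq : cterm -> aterm -> Prop :=
| CleEval t t' d m : ceval t = TCst d -> aeval t' = Some m ->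
    alpha1 d <= m -> cleq t t'
| ClePas f ts ts' : List.Forall2 cleq ts ts' -> cleq (TPas f ts) (TPas f ts')
| CleOp o ts ts' : List.Forall2 cleq ts ts' -> cleq (TOp o ts) (TOp (AO o) ts').

Inductive aleq : aterm -> aterm -> Prop :=
| AleEval s t m n : aeval s = Some m -> aeval t = Some n -> m <= n -> aleq s t
| AleVar q : aleq (TVar q) (TVar q)
| AlePas f ss ts : List.Forall2 aleq ss ts -> aleq (TPas f ss) (TPas f ts)
| AleOp o ss ts : List.Forall2 aleq ss ts -> aleq (TOp o ss) (TOp o ts).

Inductive tr : Type :=
| TrF (f : passive Dm) (qs : seq nat) (q : nat)
| TrO (o : aop) (qs : seq nat) (q : nat)
| TrL (l : Lam) (q : nat)
| TrE (p q : nat).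

Record lta : Type := LTA { st : seq nat; fin : seq nat; delta : seq tr }.

Definition tr_ok (A : lta) (t : tr) : Prop :=
  match t with
  | TrF f qs q => size qs = arP f /\ all (mem (st A)) (q :: qs)
  | TrO o qs q => size qs = arA o /\ all (mem (st A)) (q :: qs)
  | TrL _ q => q \in st A
  | TrE p q => (p \in st A) && (q \in st A)
  end.

Definition is_lta (A : lta) : Prop :=
  {subset fin A <= st A} /\ forall t, List.In t (delta A) -> tr_ok A t.

Definition run_root (A : lta) (s t : aterm) : Prop :=
  (exists l q m, List.In (TrL l q) (delta A) /\ aeval s = Some m /\ m <= l /\
     t = TVar q)
  \/ (exists f qs q, List.In (TrF f qs q) (delta A) /\
        s = TPas f (map TVar qs) /\ t = TVar q)
  \/ (exists o qs q, List.In (TrO o qs q) (delta A) /\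
        s = TOp o (map TVar qs) /\ t = TVar q)
  \/ (exists p q, List.In (TrE p q) (delta A) /\ s = TVar p /\ t = TVar q).

Definition run (A : lta) : aterm -> aterm -> Prop := at_pos (run_root A).

Definition runs (A : lta) (s : aterm) (q : nat) : Prop := star (run A) s (TVar q).

Definition lang_q (A : lta) (q : nat) (t : cterm) : Prop :=
  ground t /\ wfc t /\
  exists t' : aterm, ground t' /\ wfa t' /\ cleq t t' /\ runs A t' q.

Definition lang (A : lta) (t : cterm) : Prop :=
  exists q, q \in fin A /\ lang_q A q t.

Definition matches (A : lta) (l : cterm) (q : nat) (s : nat -> nat) : Prop :=
  runs A (tsub (fun x => TVar (s x)) (abs l)) q.

Inductive sval : Type := SState (q : nat) | SLat (l : Lam).

Definition sval_term (v : sval) : aterm :=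
  match v with SState q => TVar q | SLat l => TCst l end.

Definition inst (r : cterm) (s : nat -> sval) : aterm :=
  tsub (fun x => sval_term (s x)) (abs r).

Definition solver := (nat -> nat) -> lta -> seq constr -> seq (nat -> sval).

(* Solve restricts the constrained variables to lattice elements (the
   others keep their state) and over-approximates the solutions of c *)
Definition solver_ok (R : seq rule) (Solve : solver) : Prop :=
  (forall s A cs s', List.In s' (Solve s A cs) -> forall x,
      (x \in cvars cs -> exists l, s' x = SLat l) /\
      (x \notin cvars cs -> s' x = SState (s x)))
  /\
  (forall rl, List.In rl R -> forall A q s (th : nat -> cterm),
      matches A (lhs rl) q s ->
      (forall x, x \in vars (lhs rl) -> lang_q A (s x) (th x)) ->
      List.Forall (cond_holds th) (conds rl) ->
      exists s', List.In s' (Solve s A (conds rl)) /\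
        forall x, x \in cvars (conds rl) ->
          exists l d, s' x = SLat l /\ ceval (th x) = TCst d /\ alpha1 d <= l).

Definition in_omega (Solve : solver) (A : lta) (rl : rule) (q : nat)
    (s' : nat -> sval) : Prop :=
  exists s, matches A (lhs rl) q s /\ List.In s' (Solve s A (conds rl)) /\
    ~ (exists s'', aleq (inst (rhs rl) s') (inst (rhs rl) s'') /\
                   runs A (inst (rhs rl) s'') q).

(* Norm(s ->* q'): normalized transitions; subterms get existing states
   recognizing them or fresh states (collected in the last argument).  *)
Inductive norm_sub (A : lta) : aterm -> nat -> seq tr -> seq nat -> Prop :=
| NS_state p : norm_sub A (TVar p) p [::] [::]
| NS_exist s p : ~~ is_var s -> p \in st A -> runs A s p -> norm_sub A s p [::] [::]
| NS_lat l p : norm_sub A (TCst l) p [:: TrL l p] [:: p]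
| NS_pas f ss ps N F p : norm_list A ss ps N F ->
    norm_sub A (TPas f ss) p (N ++ [:: TrF f ps p]) (p :: F)
| NS_op o ss ps N F p : norm_list A ss ps N F ->
    norm_sub A (TOp o ss) p (N ++ [:: TrO o ps p]) (p :: F)
with norm_list (A : lta) : seq aterm -> seq nat -> seq tr -> seq nat -> Prop :=
| NL_nil : norm_list A [::] [::] [::] [::]
| NL_cons s ss p ps N Ns F Fs : norm_sub A s p N F -> norm_list A ss ps Ns Fs ->
    norm_list A (s :: ss) (p :: ps) (N ++ Ns) (F ++ Fs).

Inductive norm_root (A : lta) : aterm -> nat -> seq tr -> seq nat -> Prop :=
| NR_state p q' : norm_root A (TVar p) q' [:: TrE p q'] [::]
| NR_lat l q' : norm_root A (TCst l) q' [:: TrL l q'] [::]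
| NR_pas f ss ps N F q' : norm_list A ss ps N F ->
    norm_root A (TPas f ss) q' (N ++ [:: TrF f ps q']) F
| NR_op o ss ps N F q' : norm_list A ss ps N F ->
    norm_root A (TOp o ss) q' (N ++ [:: TrO o ps q']) F.

Record cpair : Type := CP {
  cp_rule : nat;
  cp_q : nat;
  cp_sub : nat -> sval;
  cp_new : nat;
  cp_tr : seq tr;
  cp_fresh : seq nat
}.

Definition same_key (R : seq rule) (i q : nat) (s : nat -> sval)
    (i' q' : nat) (s' : nat -> sval) : Prop :=
  i = i' /\ q = q' /\
  forall rl, List.nth_error R i = Some rl ->
    forall x, x \in vars (lhs rl) -> s x = s' x.

Definition CR_step (R : seq rule) (Solve : solver) (A B : lta) : Prop :=
  exists cps : seq cpair,
    let fresh := flatten (map (fun c => cp_new c :: cp_fresh c) cps) in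
    (forall c, List.In c cps -> exists rl,
        List.nth_error R (cp_rule c) = Some rl /\ cp_q c \in st A /\
        in_omega Solve A rl (cp_q c) (cp_sub c) /\
        norm_root A (inst (rhs rl) (cp_sub c)) (cp_new c) (cp_tr c) (cp_fresh c))
    /\ (forall i rl q s', List.nth_error R i = Some rl -> q \in st A ->
          in_omega Solve A rl q s' ->
          exists c, List.In c cps /\ same_key R i q s' (cp_rule c) (cp_q c) (cp_sub c))
    /\ (forall i j c1 c2, i <> j -> List.nth_error cps i = Some c1 ->
          List.nth_error cps j = Some c2 ->
          ~ same_key R (cp_rule c1) (cp_q c1) (cp_sub c1)
                       (cp_rule c2) (cp_q c2) (cp_sub c2))
    /\ uniq fresh /\ all (fun p => p \notin st A) fresh
    /\ B = LTA (st A ++ fresh) (fin A)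
              (delta A ++ flatten (map (fun c => cp_tr c ++ [:: TrE (cp_new c) (cp_q c)]) cps)).

Definition rename (a b : nat) (x : nat) : nat := if x == a then b else x.

Definition rename_tr (g : nat -> nat) (t : tr) : tr :=
  match t with
  | TrF f qs q => TrF f (map g qs) (g q)
  | TrO o qs q => TrO o (map g qs) (g q)
  | TrL l q => TrL l (g q)
  | TrE p q => TrE (g p) (g q)
  end.

Definition rename_lta (g : nat -> nat) (A : lta) : lta :=
  LTA (map g (st A)) (map g (fin A)) (map (rename_tr g) (delta A)).

Definition satisfiable (cs : seq constr) : Prop :=
  exists th : nat -> cterm, (forall x, ground (th x)) /\ List.Forall (cond_holds th) cs.

Definition mergeable (E : seq approx_eq) (A : lta) (q q' : nat) : Prop :=
  q \in st A /\ q' \in st A /\ q != q' /\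
  exists e (s : nat -> nat), List.In e E /\
    runs A (tsub (fun x => TVar (s x)) (abs (eq_l e))) q /\
    runs A (tsub (fun x => TVar (s x)) (abs (eq_r e))) q' /\
    satisfiable (eq_c e).

Definition merge_step (E : seq approx_eq) (A B : lta) : Prop :=
  exists q q', mergeable E A q q' /\
    (B = rename_lta (rename q' q) A \/ B = rename_lta (rename q q') A).

Definition merge_nf (E : seq approx_eq) (A B : lta) : Prop :=
  star (merge_step E) A B /\ forall q q', ~ mergeable E B q q'.

(* eval(A): closure under lattice evaluation (possibly widened)         *)
Definition eval_add (A B : lta) : Prop :=
  exists o qs q (ls : seq Lam) v m,
    List.In (TrO o qs q) (delta A) /\
    List.Forall2 (fun l p => runs A (TCst l) p) ls qs /\
    aeval_op o ls = Some v /\ v <= m /\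
    ~ (exists l, List.In (TrL l q) (delta A) /\ v <= l) /\
    B = LTA (st A) (fin A) (delta A ++ [:: TrL m q]).

Definition eval_closed (A : lta) : Prop :=
  forall o qs q (ls : seq Lam) v,
    List.In (TrO o qs q) (delta A) ->
    List.Forall2 (fun l p => runs A (TCst l) p) ls qs ->
    aeval_op o ls = Some v ->
    exists l, List.In (TrL l q) (delta A) /\ v <= l.

Definition eval_clos (A B : lta) : Prop := star eval_add A B /\ eval_closed B.

Definition comp_step (R : seq rule) (E : seq approx_eq) (Solve : solver) (A B : lta) : Prop :=
  exists A1 A2 A3, eval_clos A A1 /\ CR_step R Solve A1 A2 /\
    merge_nf E A2 A3 /\ eval_clos A3 B.

Definition lta_eq (A B : lta) : Prop :=
  (forall q, (q \in st A) = (q \in st B)) /\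
  (forall q, (q \in fin A) = (q \in fin B)) /\
  (forall t, List.In t (delta A) <-> List.In t (delta B)).

Definition completion_terminates (R : seq rule) (E : seq approx_eq) (Solve : solver)
    (A Astar : lta) : Prop :=
  exists (k : nat) (As : nat -> lta),
    As 0 = A /\ (forall n, n < k -> comp_step R E Solve (As n) (As n.+1)) /\
    As k = Astar /\
    exists B, comp_step R E Solve Astar B /\ lta_eq B Astar.

End Completion.

(* Main.v *)
Require Import Defs.
From mathcomp Require Import all_boot all_order.
From Stdlib Require List.
From Stdlib Require Import Classical.
Set Implicit Arguments.
Unset Strict Implicit.
Unset Printing Implicit Defensive.
Import Order.Theory.

Lemma map_ext_In A B (f g : A -> B) (l : seq A) :
  (forall x, List.In x l -> f x = g x) -> map f l = map g l.
Proof.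
elim: l => [|a l IH] //= h; rewrite h; last by left.
by rewrite IH // => x hx; apply: h; right.
Qed.

Lemma in_map_iff' A B (f : A -> B) (l : seq A) y :
  List.In y (map f l) <-> exists x, f x = y /\ List.In x l.
Proof.
elim: l => [|a l IH] /=; first by split => // [[? []]].
split.
- case=> [<-|/IH [x [h1 h2]]]; first by exists a; auto.
  by exists x; auto.
- move=> [x [e [->|h]]]; first by left.
  right; apply IH; by exists x.
Qed.

Section Gen.
Variables F K O : Type.
Notation T := (term F K O).

Fixpoint term_ind' (P : T -> Prop) (Hv : forall x, P (TVar x))
  (Hp : forall f ts, List.Forall P ts -> P (TPas f ts))
  (Ho : forall o ts, List.Forall P ts -> P (TOp o ts))
  (Hc : forall k, P (TCst k)) (t : T) {struct t} : P t :=
  match t with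
  | TVar x => Hv x
  | TPas f ts => Hp f ts ((fix go (l : seq T) : List.Forall P l :=
       match l with [::] => List.Forall_nil _ | u :: l' =>
         List.Forall_cons _ (term_ind' Hv Hp Ho Hc u) (go l') end) ts)
  | TOp o ts => Ho o ts ((fix go (l : seq T) : List.Forall P l :=
       match l with [::] => List.Forall_nil _ | u :: l' =>
         List.Forall_cons _ (term_ind' Hv Hp Ho Hc u) (go l') end) ts)
  | TCst k => Hc k
  end.

Lemma mem_flatten_vars (ts : seq T) x :
  x \in flatten (map (@vars F K O) ts) <-> exists t, List.In t ts /\ x \in vars t.
Proof.
elim: ts => [|t ts IH] /=; first by split => // [[? []]].
rewrite mem_cat; split.
- case/orP => [h|/IH [u [hu hx]]]; first by exists t; auto.
  by exists u; auto.
- move=> [u [[<-|hu] hx]]; first by rewrite hx.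
  by apply/orP; right; apply/IH; exists u.
Qed.

Lemma vars_tsub (g : nat -> T) t x :
  x \in vars (tsub g t) <-> exists y, y \in vars t /\ x \in vars (g y).
Proof.
elim/term_ind': t => [y|f ts IH|o ts IH|k] /=.
- split; first by move=> h; exists y; rewrite inE eqxx.
  by move=> [z [hz h]]; move: hz; rewrite inE => /eqP <-.
- split.
  + move/mem_flatten_vars=> [u [/in_map_iff' [v [<- hv]] hx]].
    have [z [hz hg]] := proj1 (proj1 (List.Forall_forall _ _) IH v hv) hx.
    exists z; split => //; apply/mem_flatten_vars; by exists v.
  + move=> [z [/mem_flatten_vars [v [hv hz]] hg]].
    apply/mem_flatten_vars.
    exists (tsub g v); split; first by apply/in_map_iff'; exists v.
    by apply: (proj2 (proj1 (List.Forall_forall _ _) IH v hv)); exists z.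
- split.
  + move/mem_flatten_vars=> [u [/in_map_iff' [v [<- hv]] hx]].
    have [z [hz hg]] := proj1 (proj1 (List.Forall_forall _ _) IH v hv) hx.
    exists z; split => //; apply/mem_flatten_vars; by exists v.
  + move=> [z [/mem_flatten_vars [v [hv hz]] hg]].
    apply/mem_flatten_vars.
    exists (tsub g v); split; first by apply/in_map_iff'; exists v.
    by apply: (proj2 (proj1 (List.Forall_forall _ _) IH v hv)); exists z.
- by split => // [[? []]].
Qed.

Lemma ground_iff (t : T) : ground t <-> forall x, x \notin vars t.
Proof.
rewrite /ground; case: (vars t) => [|y s]; first by split.
split => // /(_ y); by rewrite inE eqxx.
Qed.

Lemma ground_tsub (g : nat -> T) t :
  (forall x, x \in vars t -> ground (g x)) -> ground (tsub g t).
Proof.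
move=> h; apply/ground_iff => x; apply/negP => /vars_tsub [y [hy hx]].
by have := proj1 (ground_iff _) (h y hy) x; rewrite hx.
Qed.

Lemma ground_tsub_inv (g : nat -> T) t x :
  x \in vars t -> ground (tsub g t) -> ground (g x).
Proof.
move=> hx /ground_iff hg; apply/ground_iff => y; apply/negP => hy.
by have := hg y; rewrite (proj2 (vars_tsub g t y)) //; exists x.
Qed.

Lemma tsub_ext (g h : nat -> T) t :
  (forall x, x \in vars t -> g x = h x) -> tsub g t = tsub h t.
Proof.
elim/term_ind': t => [y|f ts IH|o ts IH|k] /= e.
- by apply: e; rewrite inE.
- congr TPas; apply: map_ext_In => u hu.
  apply: (proj1 (List.Forall_forall _ _) IH u hu) => x hx.
  by apply: e; apply/mem_flatten_vars; exists u.
- congr TOp; apply: map_ext_In => u hu.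
  apply: (proj1 (List.Forall_forall _ _) IH u hu) => x hx.
  by apply: e; apply/mem_flatten_vars; exists u.
- by [].
Qed.
End Gen.

Lemma all_some_map A (l : seq A) : all_some (map Some l) = Some l.
Proof. by elim: l => //= a l ->. Qed.

Lemma all_some_inv A (l : seq (option A)) ls : all_some l = Some ls -> l = map Some ls.
Proof.
elim: l ls => [|[a|] l IH] [|b ls] //=; case E: (all_some l) => [l'|] //.
- by case=> <- <-; rewrite (IH _ E).
Qed.

Lemma Forall2_size A B (P : A -> B -> Prop) l l' : List.Forall2 P l l' -> size l = size l'.
Proof. by elim=> //= ? ? ? ? _ _ ->. Qed.

Lemma Forall2_map_l A B C (f : A -> C) (P : C -> B -> Prop) l l' :
  List.Forall2 (fun a b => P (f a) b) l l' -> List.Forall2 P (map f l) l'.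
Proof. by elim=> //= *; constructor. Qed.

Lemma Forall2_impl' A B (P Q : A -> B -> Prop) l l' :
  (forall a b, P a b -> Q a b) -> List.Forall2 P l l' -> List.Forall2 Q l l'.
Proof. by move=> h; elim=> *; constructor; auto. Qed.

Lemma map_Some_Forall2 A B (f : A -> option B) l ms :
  map f l = map Some ms <-> List.Forall2 (fun a m => f a = Some m) l ms.
Proof.
elim: l ms => [|a l IH] [|m ms] //=; split => //; try by inversion 1.
- by case=> h1 /IH h2; constructor.
- by inversion 1; subst; congr cons; [|apply/IH].
Qed.

Section Main.
Variable Dm : domain.
Variable Ab : absdom Dm.
Local Notation Lam := (lat Ab).
Local Notation ct := (cterm Dm).
Local Notation atm := (aterm Ab).
Local Open Scope order_scope.

Fixpoint cleq_ind' (P : ct -> atm -> Prop)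
  (H1 : forall t t' d m, ceval t = TCst d -> aeval t' = Some m -> alpha1 Ab d <= m -> P t t')
  (H2 : forall f ts ts', List.Forall2 (@cleq Dm Ab) ts ts' -> List.Forall2 P ts ts' -> P (TPas f ts) (TPas f ts'))
  (H3 : forall o ts ts', List.Forall2 (@cleq Dm Ab) ts ts' -> List.Forall2 P ts ts' -> P (TOp o ts) (TOp (AO o) ts'))
  t t' (h : cleq t t') {struct h} : P t t' :=
  match h with
  | CleEval t t' d m e1 e2 e3 => H1 t t' d m e1 e2 e3
  | ClePas f ts ts' hf => H2 f ts ts' hf
      ((fix go l l' (hl : List.Forall2 (@cleq Dm Ab) l l') : List.Forall2 P l l' :=
         match hl with
         | List.Forall2_nil => List.Forall2_nil _
         | List.Forall2_cons x y l l' hxy hl' => List.Forall2_cons _ _ (cleq_ind' H1 H2 H3 hxy) (go l l' hl')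
         end) ts ts' hf)
  | CleOp o ts ts' hf => H3 o ts ts' hf
      ((fix go l l' (hl : List.Forall2 (@cleq Dm Ab) l l') : List.Forall2 P l l' :=
         match hl with
         | List.Forall2_nil => List.Forall2_nil _
         | List.Forall2_cons x y l l' hxy hl' => List.Forall2_cons _ _ (cleq_ind' H1 H2 H3 hxy) (go l l' hl')
         end) ts ts' hf)
  end.

Lemma alpha1_gamma d (l : Lam) : alpha1 Ab d <= l <-> gamma l d.
Proof.
rewrite /alpha1 galois; split; first by apply.
by move=> h x ->.
Qed.

Lemma map_get_cst (l : seq ct) ds : map (@get_cst Dm) l = map Some ds -> l = map TCst ds.
Proof.
elim: l ds => [|a l IH] [|d ds] //=; case: a => // d' [-> /IH ->] //.
Qed.

Lemma ceval_op_cst o (ts : seq ct) ds :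
  map (@ceval Dm) ts = map TCst ds -> size ds = arO o -> ceval (TOp o ts) = TCst (opsem o ds).
Proof.
move=> e hs /=; rewrite e -map_comp.
have -> : [seq get_cst (Dm:=Dm) (TCst x) | x <- ds] = map Some ds by elim: ds {e hs} => //= ? ? ->.
by rewrite all_some_map hs eqxx.
Qed.

Lemma op_step o (ts : seq ct) (ts' : seq atm) :
  List.Forall2 (fun c a => exists d m, ceval c = TCst d /\ aeval a = Some m /\ alpha1 Ab d <= m) ts ts' ->
  size ts = arO o ->
  exists d m, ceval (TOp o ts) = TCst d /\ aeval (TOp (AO o) ts') = Some m /\ alpha1 Ab d <= m.
Proof.
move=> h hs.
have [ds [ms [e1 [e2 e3]]]] : exists ds ms, map (@ceval Dm) ts = map TCst ds /\
   List.Forall2 (fun a m => aeval a = Some m) ts' ms /\ List.Forall2 (fun d m => gamma m d) ds ms.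
  elim: h {hs} => [|c a l l' [d [m [h1 [h2 h3]]]] _ [ds [ms [e1 [e2 e3]]]]].
    by exists [::], [::]; repeat constructor.
  exists (d :: ds), (m :: ms); split; first by rewrite /= h1 e1.
  by split; constructor => //; apply/alpha1_gamma.
have sd : size ds = size ts by have := congr1 size e1; rewrite !size_map.
have sm : size ms = arO o by rewrite -(Forall2_size e3) sd hs.
exists (opsem o ds), (opA o ms); split; first by apply: ceval_op_cst => //; rewrite sd.
split.
  rewrite /= (proj2 (map_Some_Forall2 _ _ _) e2) all_some_map /= sm eqxx //.
by apply/alpha1_gamma; apply: opA_sound.
Qed.

Lemma Forall2_comb A B C (P : A -> B -> Prop) (Q : B -> C -> Prop) l l' ms :
  List.Forall2 P l l' -> List.Forall2 Q l' ms ->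
  List.Forall2 (fun a b => P a b /\ exists m, Q b m) l l'.
Proof.
move=> h; elim: h ms => [|a b l1 l1' hab _ IH] [|m ms] h2; inversion h2; subst; constructor; eauto.
Qed.

Lemma aeval_AO o (ts' : seq atm) m :
  aeval (TOp (AO o) ts') = Some m ->
  exists ms, List.Forall2 (fun a m => aeval a = Some m) ts' ms /\ size ms = arO o /\ m = opA o ms.
Proof.
rewrite /=; case E: (all_some _) => [ms|] //=; case: eqP => // hs [<-].
by exists ms; split => //; apply/map_Some_Forall2/all_some_inv.
Qed.

Lemma cleq_aeval (c : ct) (a : atm) m : cleq c a -> aeval a = Some m ->
  exists d, ceval c = TCst d /\ alpha1 Ab d <= m.
Proof.
move=> h; elim/cleq_ind': h m => [t t' d m0 e1 e2 e3|f ts ts' _ _|o ts ts' _ IH] m.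
- by rewrite e2 => -[<-]; exists d.
- by [].
- move=> /aeval_AO [ms [h1 [h2 ->]]].
  have hs : size ts = arO o by rewrite (Forall2_size IH) (Forall2_size h1).
  have := op_step (o:=o) (ts:=ts) (ts':=ts') _ hs.
  case.
    apply: Forall2_impl' (Forall2_comb IH h1) => c' a' [hP [m' hm']].
    by have [d [? ?]] := hP _ hm'; exists d, m'.
  move=> d [m' [? [e ?]]]; exists d; split => //.
  move: e; rewrite /= (proj2 (map_Some_Forall2 _ _ _) h1) all_some_map /= h2 eqxx => -[->] //.
Qed.

Lemma cleq_cst d (a : atm) : cleq (TCst d) a -> exists m, aeval a = Some m /\ alpha1 Ab d <= m.
Proof. by inversion 1; subst; move: H0 => /= [->]; exists m. Qed.

Lemma Forall2_cst (ts : seq ct) (ts' : seq atm) ds :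
  List.Forall2 (fun c a => cleq (ceval c) a) ts ts' -> map (@ceval Dm) ts = map TCst ds ->
  List.Forall2 (fun c a => exists d m, ceval c = TCst d /\ aeval a = Some m /\ alpha1 Ab d <= m) ts ts'.
Proof.
move=> h; elim: h ds => [|c a l l' hca _ IH] [|d ds] //=.
case=> e1 e2; constructor; last exact: (IH ds).
by move: hca; rewrite e1 => /cleq_cst [m [? ?]]; exists d, m.
Qed.

Lemma cleq_ceval (c : ct) (a : atm) : cleq c a -> cleq (ceval c) a.
Proof.
elim/cleq_ind' => [t t' d m e1 e2 e3|f ts ts' _ IH|o ts ts' _ IH].
- by apply: (CleEval (d:=d) (m:=m)) => //; rewrite e1.
- by rewrite /=; constructor; apply: Forall2_map_l.
- case E: (ceval (TOp o ts)) => [x|f l|o' l|d].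
  + by move: E => /=; case: all_some => [?|]; [case: ifP|].
  + by move: E => /=; case: all_some => [?|]; [case: ifP|].
  + move: E => /=; case: all_some => [ds|]; [case: ifP => _ //|]; case=> <- <-;
    by constructor; apply: Forall2_map_l.
  + have [ds [hd hs]] : exists ds, map (@ceval Dm) ts = map TCst ds /\ size ds = arO o.
      move: E => /=; case E2: all_some => [ds|] //; case: eqP => // hs _.
      by exists ds; split => //; apply: map_get_cst; apply: all_some_inv.
    have hts : size ts = arO o by rewrite -hs; have := congr1 size hd; rewrite !size_map.
    have [d' [m [e1 [e2 e3]]]] := op_step (Forall2_cst IH hd) hts.
    move: e1; rewrite E => -[->].
    exact: (@CleEval Dm Ab (TCst d') _ d' m (erefl _) e2 e3).
Qed.
End Main.

Section Lists.
Variables A B : Type.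
Variable P : A -> B -> Prop.
Lemma F2_cat_inv_l l1 l2 l' : List.Forall2 P (l1 ++ l2) l' ->
  exists l1' l2', l' = l1' ++ l2' /\ List.Forall2 P l1 l1' /\ List.Forall2 P l2 l2'.
Proof.
elim: l1 l' => [|a l1 IH] l' /=; first by move=> h; exists [::], l'; split => //; split => //; constructor.
move=> h; inversion h; subst.
have [m1 [m2 [-> [h1 h2]]]] := IH _ H3.
by exists (y :: m1), m2; split => //; split => //; constructor.
Qed.
Lemma F2_cat_inv_r l l1' l2' : List.Forall2 P l (l1' ++ l2') ->
  exists l1 l2, l = l1 ++ l2 /\ List.Forall2 P l1 l1' /\ List.Forall2 P l2 l2'.
Proof.
elim: l1' l => [|a l1 IH] l' /=; first by move=> h; exists [::], l'; split => //; split => //; constructor.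
move=> h; inversion h; subst.
have [m1 [m2 [-> [h1 h2]]]] := IH _ H3.
by exists (x :: m1), m2; split => //; split => //; constructor.
Qed.
Lemma F2_cat l1 l1' l2 l2' : List.Forall2 P l1 l1' -> List.Forall2 P l2 l2' ->
  List.Forall2 P (l1 ++ l2) (l1' ++ l2').
Proof. by move=> h1 h2; elim: h1 => //= *; constructor. Qed.
Lemma F2_refl (l : seq A) (Q : A -> A -> Prop) : (forall x, Q x x) -> List.Forall2 Q l l.
Proof. by move=> h; elim: l => *; constructor. Qed.
End Lists.

Lemma star_trans T (R : T -> T -> Prop) x y z : star R x y -> star R y z -> star R x z.
Proof. by elim=> // a b c h _ IH /IH; apply: star_step. Qed.

Lemma star_map T U (R : T -> T -> Prop) (R' : U -> U -> Prop) (g : T -> U) x y :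
  (forall a b, R a b -> R' (g a) (g b)) -> star R x y -> star R' (g x) (g y).
Proof. by move=> h; elim=> [a|a b c hab _ IH]; [constructor|apply: star_step (h _ _ hab) IH]. Qed.

Lemma star_mono T (R R' : T -> T -> Prop) x y :
  (forall a b, R a b -> R' a b) -> star R x y -> star R' x y.
Proof. by move=> h; apply: (star_map (g:=id)). Qed.

Section Runs.
Variable Dm : domain.
Variable Ab : absdom Dm.
Local Notation Lam := (lat Ab).
Local Notation ct := (cterm Dm).
Local Notation atm := (aterm Ab).
Local Open Scope order_scope.

Definition node (k : passive Dm + aop Dm) (ts : seq atm) : atm :=
  match k with inl f => TPas f ts | inr o => TOp o ts end.

Lemma at_pos_node (P : atm -> atm -> Prop) k l1 s t l2 : at_pos P s t ->
  at_pos P (node k (l1 ++ s :: l2)) (node k (l1 ++ t :: l2)).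
Proof. by move=> h; case: k => ? /=; constructor. Qed.

Lemma star_node (X : lta Ab) k l1 s t l2 : star (run X) s t ->
  star (run X) (node k (l1 ++ s :: l2)) (node k (l1 ++ t :: l2)).
Proof. by apply: (star_map (g := fun x => node k (l1 ++ x :: l2))) => a b; apply: at_pos_node. Qed.

Lemma star_node_F2 (X : lta Ab) k bs as' :
  List.Forall2 (star (run X)) bs as' -> star (run X) (node k bs) (node k as').
Proof.
move=> h.
suff H : forall l1, star (run X) (node k (l1 ++ bs)) (node k (l1 ++ as')).
  exact: (H [::]).
elim: h => [|b a bs1 as1 hba _ IH] l1; first by constructor.
apply: star_trans (star_node k l1 bs1 hba) _.
by have := IH (rcons l1 a); rewrite -!cats1 -!catA.
Qed.

Lemma run_mono (X Y : lta Ab) s t :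
  (forall T, List.In T (delta X) -> List.In T (delta Y)) ->
  star (run X) s t -> star (run Y) s t.
Proof.
move=> h; apply: star_mono => a b; elim => [u v hr|f l1 u v l2 _ IH|o l1 u v l2 _ IH];
  last 2 first; try by constructor.
apply: at_root; case: hr => [[l [q [m [h1 h2]]]]|[[f [qs [q [h1 h2]]]]|[[o [qs [q [h1 h2]]]]|[p [q [h1 h2]]]]]].
- by left; exists l, q, m; split => //; apply: h.
- by right; left; exists f, qs, q; split => //; apply: h.
- by right; right; left; exists o, qs, q; split => //; apply: h.
- by right; right; right; exists p, q; split => //; apply: h.
Qed.

Lemma all_some_cat_None T (l1 l2 : seq (option T)) : all_some (l1 ++ None :: l2) = None.
Proof. by elim: l1 => [|[a|] l1 IH] //=; rewrite IH. Qed.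

Lemma step_aeval (X : lta Ab) s t : run X s t -> aeval t = None.
Proof.
elim=> [u v [[? [? [? [? [? [? ->]]]]]]|[[? [? [? [? [? ->]]]]]|[[? [? [? [? [? ->]]]]]|[? [? [? [? ->]]]]]]]|//|o l1 u v l2 _ IH] //=.
by rewrite map_cat /= IH all_some_cat_None.
Qed.

Lemma In_cat_mid T (v : T) l1 l2 : List.In v (l1 ++ v :: l2).
Proof. by elim: l1 => [|a l1 IH] /=; [left|right]. Qed.

Lemma step_vars (X : lta Ab) s t : run X s t -> exists x, x \in vars t.
Proof.
elim=> [u v [[? [q [? [? [? [? ->]]]]]]|[[? [? [q [? [? ->]]]]]|[[? [? [q [? [? ->]]]]]|[? [q [? [? ->]]]]]]]|f l1 u v l2 _ [x IH]|o l1 u v l2 _ [x IH]] /=;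
 try by exists q; rewrite inE.
- by exists x; apply/mem_flatten_vars; exists v; split => //; apply: In_cat_mid.
- by exists x; apply/mem_flatten_vars; exists v; split => //; apply: In_cat_mid.
Qed.

Lemma star_novars (X : lta Ab) b a : star (run X) b a -> vars a = [::] -> b = a.
Proof.
elim=> // x y z h _ IH hz; have e := IH hz; subst z.
have [v hv] := step_vars h.
by have := proj1 (ground_iff y) hz v; rewrite hv.
Qed.

Lemma F2_mid A B (R : A -> B -> Prop) l1 (u v : A) l2 qs :
  List.Forall2 R (l1 ++ v :: l2) qs -> (forall p, R v p -> R u p) ->
  List.Forall2 R (l1 ++ u :: l2) qs.
Proof.
move=> /F2_cat_inv_l [m1 [m2 [-> [h1 h2]]]] h; apply: F2_cat => //.
by inversion h2; subst; constructor; auto.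
Qed.

Lemma runs_refl_map (X : lta Ab) qs : List.Forall2 (fun t p => runs X t p) (map TVar qs) qs.
Proof. by elim: qs => [|q qs IH] /=; constructor => //; constructor. Qed.

Lemma run_decomp (X : lta Ab) k ts q :
  star (run X) (node k ts) (TVar q) -> aeval (node k ts) = None ->
  exists qs, List.Forall2 (fun t p => runs X t p) ts qs /\ runs X (node k (map TVar qs)) q.
Proof.
move=> h; remember (node k ts) as T eqn:ET; remember (TVar q) as V eqn:EV.
elim: h ts ET EV => [x|x y z hxy hyz IH] ts ET EV hN.
- by subst x; case: k EV hN => ?.
- subst z.
  case: hxy ET hN hyz IH => [u v hr|f' l1 u v l2 hs|o' l1 u v l2 hs] ET hN hyz IH.
  + case: (hr) => [[l [q0 [m [_ [ha _]]]]]|[[f0 [qs [q0 [_ [eu _]]]]]|[[o0 [qs [q0 [_ [eu _]]]]]|[p [q0 [_ [eu _]]]]]]].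
    * by rewrite hN in ha.
    * have ets : ts = map TVar qs by move: (ET); rewrite eu; clear; case: k => ?  //= -[_ ->].
      exists qs; split; first by rewrite ets; apply: runs_refl_map.
      by rewrite -ets -ET; apply: star_step (at_root hr) hyz.
    * have ets : ts = map TVar qs by move: (ET); rewrite eu; clear; case: k => ?  //= -[_ ->].
      exists qs; split; first by rewrite ets; apply: runs_refl_map.
      by rewrite -ets -ET; apply: star_step (at_root hr) hyz.
    * by move: (ET); rewrite eu; clear; case: k => ?.
  + move: ET; case: k IH hN => k0 //= IH hN -[ef ets]; subst k0 ts.
    have [qs [h1 h2]] := IH (l1 ++ v :: l2) erefl erefl erefl.
    exists qs; split => //; apply: F2_mid h1 _ => p hp; exact: star_step hs hp.
  + move: ET; case: k IH hN => k0 //= IH hN -[ef ets]; subst k0 ts.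
    have hN' : aeval (TOp o' (l1 ++ v :: l2)) = None.
      by apply: (step_aeval (X:=X) (s := TOp o' (l1 ++ u :: l2))); constructor.
    have [qs [h1 h2]] := IH (l1 ++ v :: l2) erefl erefl hN'.
    exists qs; split => //; apply: F2_mid h1 _ => p hp; exact: star_step hs hp.
Qed.

Lemma run_inv_node (X : lta Ab) k b as' :
  star (run X) b (node k as') ->
  exists bs, b = node k bs /\ List.Forall2 (star (run X)) bs as'.
Proof.
move=> h; remember (node k as') as T eqn:ET.
elim: h as' ET => [x|x y z hxy hyz IH] as' ET.
- subst; exists as'; split => //; apply: F2_refl => ?; constructor.
- have [bs [ey hb]] := IH as' ET.
  case: hxy ey => [u v hr|f' l1 u v l2 hs|o' l1 u v l2 hs] ey.
  + subst v; case: hr => [[? [? [? [? [? [? e]]]]]]|[[? [? [? [? [? e]]]]]|[[? [? [? [? [? e]]]]]|[? [? [? [? e]]]]]]];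
    by move: e; clear; case: k => ?.
  + clear IH ET; move: ey; case: k => ?  //= -[ef eb]; subst; exists (l1 ++ u :: l2); split => //.
    by apply: F2_mid hb _ => p hp; apply: star_step hs hp.
  + clear IH ET; move: ey; case: k => ?  //= -[ef eb]; subst; exists (l1 ++ u :: l2); split => //.
    by apply: F2_mid hb _ => p hp; apply: star_step hs hp.
Qed.

End Runs.

Lemma all_In A (p : pred A) (l : seq A) : (forall x, List.In x l -> p x) -> all p l.
Proof. by elim: l => //= a l IH h; rewrite h ?IH //; [move=> x hx; apply: h; right|left]. Qed.

Lemma all_In_inv A (p : pred A) (l : seq A) x : all p l -> List.In x l -> p x.
Proof. by elim: l => //= a l IH /andP [h1 h2] [<-|/IH]; auto. Qed.

Lemma ground_list F K O (ts : seq (term F K O)) :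
  (forall b, List.In b ts -> ground b) <-> (forall x, x \notin flatten (map (@vars F K O) ts)).
Proof.
split.
- move=> h x; apply/negP => /mem_flatten_vars [b [hb hx]].
  by move: (proj1 (ground_iff b) (h b hb) x); rewrite hx.
- move=> h b hb; apply/ground_iff => x; apply/negP => hx.
  by move: (h x); rewrite (proj2 (mem_flatten_vars _ _)) //; exists b.
Qed.

Lemma ground_TPas F K O f (ts : seq (term F K O)) :
  ground (TPas f ts) <-> (forall b, List.In b ts -> ground b).
Proof. rewrite ground_list; exact: ground_iff. Qed.

Lemma ground_TOp F K O o (ts : seq (term F K O)) :
  ground (TOp o ts) <-> (forall b, List.In b ts -> ground b).
Proof. rewrite ground_list; exact: ground_iff. Qed.

Section Main2.
Variable Dm : domain.
Variable Ab : absdom Dm.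
Local Notation Lam := (lat Ab).
Local Notation ct := (cterm Dm).
Local Notation atm := (aterm Ab).
Local Open Scope order_scope.

Lemma aeval_gw (a : atm) m : aeval a = Some m -> ground a /\ wfa a.
Proof.
elim/term_ind': a m => [x|f ts IH|o ts IH|k] m //=.
- case E: (all_some _) => [ms|] //= ho.
  have hF := proj1 (map_Some_Forall2 _ _ _) (all_some_inv E).
  have hs : size ts = size ms := Forall2_size hF.
  have hgw : forall b, List.In b ts -> ground b /\ wfa b.
    move=> b hb; have [mb hmb] : exists mb, aeval b = Some mb.
      elim: hF hb {IH E hs ho} => // a mm l l' ha _ IH2 [<-|/IH2 //]; by exists mm.
    exact: (proj1 (List.Forall_forall _ _) IH b hb mb hmb).
  split; first by apply/ground_TOp => b /hgw [].
  apply/andP; split; last by apply: all_In => b /hgw [].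
  rewrite hs; case: o ho => [o| |] /=; first by case: eqP => // ->.
  all: by case: ms {hF hs E} => [|a [|b [|]]].
Qed.

Definition Krel (X : lta Ab) (c : ct) (a : atm) :=
  exists b, ground b /\ wfa b /\ cleq c b /\ star (run X) b a.

Lemma F2_K (X : lta Ab) cs as' : List.Forall2 (Krel X) cs as' ->
  exists bs, List.Forall2 (@cleq Dm Ab) cs bs /\ List.Forall2 (star (run X)) bs as' /\
    forall b, List.In b bs -> ground b /\ wfa b.
Proof.
elim=> [|c a l l' [b [g [w [h1 h2]]]] _ [bs [e1 [e2 e3]]]].
  by exists [::]; split; [constructor|split; [constructor|]].
exists (b :: bs); split; first by constructor.
split; first by constructor.
by move=> b' [<-|/e3].
Qed.

Lemma K_pas (X : lta Ab) f cs as' : wfc (TPas f cs) ->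
  List.Forall2 (Krel X) cs as' -> Krel X (TPas f cs) (TPas f as').
Proof.
move=> /andP [/eqP hs _] /F2_K [bs [e1 [e2 e3]]].
exists (TPas f bs); split; first by apply/ground_TPas => b /e3 [].
split; first by apply/andP; split; [rewrite -(Forall2_size e1) hs|apply: all_In => b /e3 []].
split; first by constructor.
exact: (star_node_F2 (inl f) e2).
Qed.

Lemma K_op (X : lta Ab) o cs as' : wfc (TOp o cs) ->
  List.Forall2 (Krel X) cs as' -> Krel X (TOp o cs) (TOp (AO o) as').
Proof.
move=> /andP [/eqP hs _] /F2_K [bs [e1 [e2 e3]]].
exists (TOp (AO o) bs); split; first by apply/ground_TOp => b /e3 [].
split; first by apply/andP; split; [rewrite -(Forall2_size e1) hs|apply: all_In => b /e3 []].
split; first by constructor.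
exact: (star_node_F2 (inr (AO o)) e2).
Qed.


Lemma F2_map2 A B C (P : B -> C -> Prop) (f : A -> B) (g : A -> C) l :
  (forall r, List.In r l -> P (f r) (g r)) -> List.Forall2 P (map f l) (map g l).
Proof. elim: l => [|a l IH] h /=; first by constructor. constructor; first by apply: h; left. by apply: IH => r hr; apply: h; right. Qed.

Lemma inst_var x (s : nat -> Defs.sval Ab) : inst (TVar x) s = sval_term (s x).
Proof. by []. Qed.
Lemma inst_cst d (s : nat -> Defs.sval Ab) : inst (TCst d) s = TCst (alpha1 Ab d).
Proof. by []. Qed.
Lemma inst_pas f rs (s : nat -> Defs.sval Ab) : inst (TPas f rs) s = TPas f (map (fun r => inst r s) rs).
Proof. by rewrite /inst /abs /= -map_comp. Qed.
Lemma inst_op o rs (s : nat -> Defs.sval Ab) : inst (TOp o rs) s = TOp (AO o) (map (fun r => inst r s) rs).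
Proof. by rewrite /inst /abs /= -map_comp. Qed.

Lemma wfc_sub (th : nat -> ct) (r : ct) :
  wfc (tsub th r) -> forall c, List.In c (match r with TPas _ rs | TOp _ rs => rs | _ => [::] end) ->
  wfc (tsub th c).
Proof.
case: r => //= [f rs|o rs] /andP [_ h] c hc; apply: (all_In_inv h);
  by apply/in_map_iff'; exists c.
Qed.

Lemma K0 (X : lta Ab) (th : nat -> ct) (s : nat -> Defs.sval Ab) (r : ct) :
  wfc (tsub th r) -> (forall x, x \in vars r -> Krel X (th x) (sval_term (s x))) ->
  Krel X (tsub th r) (inst r s).
Proof.
elim/term_ind': r => [x|f rs IH|o rs IH|d] hw H.
- by apply: H; rewrite inE.
- rewrite inst_pas /=; apply: K_pas => //; apply: F2_map2 => r hr.
  apply: (proj1 (List.Forall_forall _ _) IH r hr); first exact: (wfc_sub hw).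
  by move=> x hx; apply: H; apply/mem_flatten_vars; exists r.
- rewrite inst_op /=; apply: K_op => //; apply: F2_map2 => r hr.
  apply: (proj1 (List.Forall_forall _ _) IH r hr); first exact: (wfc_sub hw).
  by move=> x hx; apply: H; apply/mem_flatten_vars; exists r.
- exists (TCst (alpha1 Ab d)); split => //; split => //; split; last by constructor.
  by apply: (@CleEval Dm Ab (TCst d) _ d (alpha1 Ab d)).
Qed.


Lemma K_eval (X : lta Ab) c (a a' : atm) m n : Krel X c a -> aeval a = Some m ->
  aeval a' = Some n -> m <= n -> Krel X c a'.
Proof.
move=> [b [_ [_ [hc hs]]]] ha ha' hmn.
have [ga _] := aeval_gw ha.
have eb := star_novars hs ga; subst b.
have [d [hd hdm]] := cleq_aeval hc ha.
have [ga' wa'] := aeval_gw ha'.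
exists a'; split => //; split => //; split; last by constructor.
exact: (CleEval hd ha' (le_trans hdm hmn)).
Qed.

Lemma F2_map_l2 A B C (P : B -> C -> Prop) (Q : A -> C -> Prop) (f : A -> B) l ts :
  List.Forall2 Q l ts -> (forall r t, List.In r l -> Q r t -> P (f r) t) ->
  List.Forall2 P (map f l) ts.
Proof.
elim=> [|r t l' ts' hq _ IH] h /=; constructor; first by apply: h => //; left.
by apply: IH => r' t' hr; apply: h; right.
Qed.

Lemma F2_map_inv A B C (Q : B -> C -> Prop) (g : A -> B) l ts :
  List.Forall2 Q (map g l) ts -> List.Forall2 (fun r t => Q (g r) t) l ts.
Proof.
elim: l ts => [|a l IH] [|t ts] /= h; inversion h; subst; constructor; auto.
Qed.

Lemma K_aleq (X : lta Ab) (th : nat -> ct) (s : nat -> Defs.sval Ab) (r : ct) a' :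
  wfc (tsub th r) -> (forall x, x \in vars r -> Krel X (th x) (sval_term (s x))) ->
  aleq (inst r s) a' -> Krel X (tsub th r) a'.
Proof.
elim/term_ind': r a' => [x|f rs IH|o rs IH|d] a' hw H h.
- have Hx := H x (mem_head _ _); rewrite inst_var in h; move: h Hx.
  case: (s x) => [q|l] /= h Hx; inversion h; subst => //.
  by apply: K_eval Hx H0 H1 H2.
- rewrite inst_pas in h; inversion h; subst => //.
  apply: K_pas => //.
  apply: F2_map_l2 (F2_map_inv H3) _ => r t hr ht.
  apply: (proj1 (List.Forall_forall _ _) IH r hr) ht; first exact: (wfc_sub hw).
  by move=> x hx; apply: H; apply/mem_flatten_vars; exists r.
- have HK := K0 hw H.
  rewrite inst_op in h HK; inversion h; subst.
    by apply: K_eval HK H0 H1 H2.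
  apply: K_op => //.
  apply: F2_map_l2 (F2_map_inv H3) _ => r t hr ht.
  apply: (proj1 (List.Forall_forall _ _) IH r hr) ht; first exact: (wfc_sub hw).
  by move=> x hx; apply: H; apply/mem_flatten_vars; exists r.
- have HK := K0 hw H.
  rewrite inst_cst in h HK; inversion h; subst.
  by apply: K_eval HK H0 H1 H2.
Qed.


Lemma vars_tmap F K O K' O' (fk : K -> K') (fo : O -> O') (t : term F K O) :
  vars (tmap fk fo t) = vars t.
Proof.
elim/term_ind': t => //= [f ts IH|o ts IH]; rewrite -map_comp; congr flatten;
  apply: map_ext_In => u hu; exact: (proj1 (List.Forall_forall _ _) IH u hu).
Qed.

Lemma F2_map_both A B C D (P : C -> D -> Prop) (f : A -> C) (g : B -> D) l l' :
  List.Forall2 (fun a b => P (f a) (g b)) l l' -> List.Forall2 P (map f l) (map g l').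
Proof. by elim=> //= *; constructor. Qed.

Lemma F2_impl_in A B (P Q : A -> B -> Prop) l l' :
  List.Forall2 P l l' -> (forall a b, List.In a l -> P a b -> Q a b) -> List.Forall2 Q l l'.
Proof.
elim=> [|a b l1 l1' hab _ IH] h; constructor; first by apply: h => //; left.
by apply: IH => a' b' ha; apply: h; right.
Qed.

Lemma match_list (X : lta Ab) (th : nat -> ct) (ls : seq ct) ts' qs
  (IH : List.Forall (fun l => forall t' q, passive_only l -> uniq (vars l) ->
        cleq (tsub th l) t' -> ground t' -> wfa t' -> runs X t' q ->
        exists sg : nat -> nat, runs X (tsub (fun x => TVar (sg x)) (abs Ab l)) q /\
          forall x, x \in vars l -> Krel X (th x) (TVar (sg x))) ls) :
  all (@passive_only _ _ _) ls -> uniq (flatten (map (@vars _ _ _) ls)) ->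
  List.Forall2 (fun l t => cleq (tsub th l) t) ls ts' ->
  (forall b, List.In b ts' -> ground b /\ wfa b) ->
  List.Forall2 (fun t p => runs X t p) ts' qs ->
  exists sg : nat -> nat,
    List.Forall2 (fun l p => runs X (tsub (fun x => TVar (sg x)) (abs Ab l)) p) ls qs /\
    forall x, x \in flatten (map (@vars _ _ _) ls) -> Krel X (th x) (TVar (sg x)).
Proof.
elim: ls ts' qs IH => [|l ls IHl] ts' qs IH /=.
  move=> _ _ h1 _ h2; inversion h1; subst; inversion h2; subst.
  by exists (fun _ => 0); split => //; constructor.
move=> /andP [pl pls]; rewrite cat_uniq => /and3P [ul hn uls] h1 hgw h2.
inversion h1 as [|? t ? ts1 hc hcs]; subst; inversion h2 as [|? p ? qs1 hr hrs]; subst.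
inversion IH as [|? ? IHh IHt]; subst.
have [gt wt] := hgw t (or_introl erefl).
have [s1 [r1 k1]] := IHh t p pl ul hc gt wt hr.
have [s2 [r2 k2]] := IHl ts1 qs1 IHt pls uls hcs (fun b hb => hgw b (or_intror hb)) hrs.
exists (fun x => if x \in vars l then s1 x else s2 x); split.
- constructor.
  + rewrite (tsub_ext (h := fun x => TVar (s1 x))) // => x; rewrite vars_tmap => -> //.
  + apply: (F2_impl_in r2) => l' p' hl' hr'.
    rewrite (tsub_ext (h := fun x => TVar (s2 x))) // => x; rewrite vars_tmap => hx.
    have hx2 : x \in flatten (map (@vars _ _ _) ls) by apply/mem_flatten_vars; exists l'.
    by case: ifP => // hxl; move/hasPn: hn => /(_ x hx2); rewrite hxl.
- move=> x; rewrite mem_cat; case hx: (x \in vars l) => /=; first by move=> _; apply: k1.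
  exact: k2.
Qed.


Lemma match_lhs (X : lta Ab) (th : nat -> ct) (l : ct) t' q :
  passive_only l -> uniq (vars l) ->
  cleq (tsub th l) t' -> ground t' -> wfa t' -> runs X t' q ->
  exists sg : nat -> nat, runs X (tsub (fun x => TVar (sg x)) (abs Ab l)) q /\
    forall x, x \in vars l -> Krel X (th x) (TVar (sg x)).
Proof.
elim/term_ind': l t' q => [x|f ls IH|o ls IH|d] t' q //= hp hu hc hg hw hr.
- exists (fun _ => q); split; first by constructor.
  move=> y; rewrite inE => /eqP ->; exists t'; split => //.
- inversion hc as [? ? d m hce|? ? ts' hF|]; subst; first by [].
  have [qs [hq1 hq2]] := run_decomp (k := inl f) hr erefl.
  have hgw : forall b, List.In b ts' -> ground b /\ wfa b.
    move=> b hb; split; first exact: (proj1 (ground_TPas _ _) hg).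
    by move: hw => /andP [_ h]; apply: (all_In_inv h).
  have [sg [h1 h2]] := match_list IH hp hu (F2_map_inv hF) hgw hq1.
  exists sg; split => //.
  rewrite -map_comp; apply: star_trans hq2.
  apply: (@star_node_F2 _ _ X (inl f)); apply: F2_map_both; exact: h1.
Qed.

End Main2.

Lemma In_cat_iff A (x : A) l1 l2 : List.In x (l1 ++ l2) <-> List.In x l1 \/ List.In x l2.
Proof.
elim: l1 => [|a l1 IH] /=; first by split; [right|case].
rewrite IH; tauto.
Qed.

Lemma In_flatten A (x : A) ss : List.In x (flatten ss) <-> exists s, List.In s ss /\ List.In x s.
Proof.
elim: ss => [|s ss IH] /=; first by split => // [[? []]].
rewrite In_cat_iff IH; split.
- case=> [h|[s' [h1 h2]]]; [exists s|exists s']; auto.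
- by move=> [s' [[<-|h1] h2]]; [left|right; exists s'].
Qed.

Lemma In_mem (T : eqType) (x : T) s : List.In x s -> x \in s.
Proof. by elim: s => //= a s IH [->|/IH]; rewrite inE ?eqxx // => ->; rewrite orbT. Qed.

Lemma mem_In (T : eqType) (x : T) s : x \in s -> List.In x s.
Proof. by elim: s => //= a s IH; rewrite inE => /orP [/eqP ->|/IH]; auto. Qed.

Lemma F2_map_both' A B D (P : A -> D -> Prop) (g : B -> D) l l' :
  List.Forall2 (fun a b => P a (g b)) l l' -> List.Forall2 P l (map g l').
Proof. by elim=> //= *; constructor. Qed.

Section Main3.
Variable Dm : domain.
Variable Ab : absdom Dm.
Local Notation Lam := (lat Ab).
Local Notation ct := (cterm Dm).
Local Notation atm := (aterm Ab).
Local Open Scope order_scope.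

Definition tr_states (T : tr Ab) : seq nat :=
  match T with
  | TrF _ qs q => q :: qs
  | TrO _ qs q => q :: qs
  | TrL _ q => [:: q]
  | TrE p q => [:: p; q]
  end.

Definition Inv (X : lta Ab) : Prop :=
  forall T, List.In T (delta X) -> forall p, p \in tr_states T -> p \in st X.

Lemma mem_vars_cat (l1 : seq atm) (u : atm) l2 p :
  p \in flatten (map (@vars _ _ _) (l1 ++ u :: l2)) =
  (p \in flatten (map (@vars _ _ _) (l1 ++ l2))) || (p \in vars u).
Proof. by rewrite !map_cat !flatten_cat /= !mem_cat orbCA orbC. Qed.

Lemma step_vars_fwd (X : lta Ab) s t : Inv X -> run X s t ->
  forall p, p \in vars t -> p \in vars s \/ p \in st X.
Proof.
move=> hI; elim=> [u v hr|f l1 u v l2 _ IH|o l1 u v l2 _ IH] p /=.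
- case: hr => [[l [q [m [h1 [_ [_ ->]]]]]]|[[f [qs [q [h1 [_ ->]]]]]|[[o [qs [q [h1 [_ ->]]]]]|[p' [q [h1 [_ ->]]]]]]];
  rewrite /= inE => /eqP ->; right; apply: (hI _ h1); rewrite /= ?inE eqxx ?orbT //.
- rewrite !mem_vars_cat => /orP [->|/IH [->|]]; auto; by rewrite orbT; auto.
- rewrite !mem_vars_cat => /orP [->|/IH [->|]]; auto; by rewrite orbT; auto.
Qed.

Lemma star_vars_fwd (X : lta Ab) s t : Inv X -> star (run X) s t ->
  forall p, p \in vars t -> p \in vars s \/ p \in st X.
Proof.
move=> hI; elim=> [|x y z h _ IH] p; first by left.
by move=> /IH [/(step_vars_fwd hI h)|]; auto.
Qed.

Lemma runs_st (X : lta Ab) t q : Inv X -> ground t -> runs X t q -> q \in st X.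
Proof.
move=> hI hg hr; have := star_vars_fwd hI hr (p := q); rewrite /= inE eqxx => /(_ isT) [h|//].
by move: (proj1 (ground_iff t) hg q); rewrite h.
Qed.

Lemma step_vars_bwd (X : lta Ab) s t : Inv X -> run X s t ->
  forall p, p \in vars s -> p \in vars t \/ p \in st X.
Proof.
move=> hI; elim=> [u v hr|f l1 u v l2 _ IH|o l1 u v l2 _ IH] p /=.
- case: hr => [[l [q [m [h1 [ha [_ ->]]]]]]|[[f [qs [q [h1 [-> ->]]]]]|[[o [qs [q [h1 [-> ->]]]]]|[p' [q [h1 [-> ->]]]]]]].
  + move=> hp; have [gu _] := aeval_gw ha.
    by move: (proj1 (ground_iff u) gu p); rewrite hp.
  + move=> hp; right; apply: (hI _ h1); rewrite /= inE; apply/orP; right.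
    move/mem_flatten_vars: hp => [b [/in_map_iff' [x [<- hx]] hb]].
    by move: hb; rewrite inE => /eqP ->; apply: In_mem.
  + move=> hp; right; apply: (hI _ h1); rewrite /= inE; apply/orP; right.
    move/mem_flatten_vars: hp => [b [/in_map_iff' [x [<- hx]] hb]].
    by move: hb; rewrite inE => /eqP ->; apply: In_mem.
  + by rewrite inE => /eqP ->; right; apply: (hI _ h1); rewrite inE eqxx.
- rewrite !mem_vars_cat => /orP [->|/IH [->|]]; auto; by rewrite orbT; auto.
- rewrite !mem_vars_cat => /orP [->|/IH [->|]]; auto; by rewrite orbT; auto.
Qed.

Lemma star_vars_bwd (X : lta Ab) s t : Inv X -> star (run X) s t ->
  forall p, p \in vars s -> p \in vars t \/ p \in st X.
Proof.
move=> hI; elim=> [|x y z h _ IH] p; first by left.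
by move=> /(step_vars_bwd hI h) [/IH|]; auto.
Qed.

Scheme norm_sub_mut := Induction for norm_sub Sort Prop
  with norm_list_mut := Induction for norm_list Sort Prop.

Definition incl_d (N : seq (tr Ab)) (Y : lta Ab) := forall T, List.In T N -> List.In T (delta Y).

Lemma incl_cat N1 N2 Y : incl_d (N1 ++ N2) Y -> incl_d N1 Y /\ incl_d N2 Y.
Proof. by move=> h; split => T hT; apply: h; apply/In_cat_iff; auto. Qed.

Lemma norm_run_sub (A Y : lta Ab) :
  (forall T, List.In T (delta A) -> List.In T (delta Y)) ->
  forall a p N F, norm_sub A a p N F -> incl_d N Y -> runs Y a p.
Proof.
move=> hAY.
apply: (norm_sub_mut (P := fun a p N F _ => incl_d N Y -> runs Y a p)
                     (P0 := fun ss ps N F _ => incl_d N Y -> List.Forall2 (fun a p => runs Y a p) ss ps)).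
- by move=> p _; constructor.
- by move=> s p _ _ h _; apply: run_mono h.
- move=> l p h; apply: star_step; last by constructor.
  apply: at_root; left; exists l, p, l; split; first by apply: h; left.
  by split.
- move=> f ss ps N F p hn IH hN; have [h1 h2] := incl_cat hN.
  apply: star_trans (@star_node_F2 _ _ Y (inl f) _ (map TVar ps) _) _.
    by apply: F2_map_both'; exact: IH h1.
  apply: star_step; last by constructor.
  by apply: at_root; right; left; exists f, ps, p; split => //; apply: h2; left.
- move=> o ss ps N F p hn IH hN; have [h1 h2] := incl_cat hN.
  apply: star_trans (@star_node_F2 _ _ Y (inr o) _ (map TVar ps) _) _.
    by apply: F2_map_both'; exact: IH h1.
  apply: star_step; last by constructor.
  by apply: at_root; right; right; left; exists o, ps, p; split => //; apply: h2; left.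
- by constructor.
- move=> s ss p ps N Ns F Fs _ IH1 _ IH2 hN; have [h1 h2] := incl_cat hN; constructor; auto.
Qed.


Lemma norm_run_list (A Y : lta Ab) :
  (forall T, List.In T (delta A) -> List.In T (delta Y)) ->
  forall ss ps N F, norm_list A ss ps N F -> incl_d N Y ->
    List.Forall2 (fun a p => runs Y a p) ss ps.
Proof.
move=> hAY.
apply: (norm_list_mut (P := fun a p N F _ => incl_d N Y -> runs Y a p)
                     (P0 := fun ss ps N F _ => incl_d N Y -> List.Forall2 (fun a p => runs Y a p) ss ps)).
- by move=> p _; constructor.
- by move=> s p _ _ h _; apply: run_mono h.
- move=> l p h; apply: star_step; last by constructor.
  apply: at_root; left; exists l, p, l; split; first by apply: h; left.
  by split.
- move=> f ss ps N F p hn IH hN; have [h1 h2] := incl_cat hN.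
  apply: star_trans (@star_node_F2 _ _ Y (inl f) _ (map TVar ps) _) _.
    by apply: F2_map_both'; exact: IH h1.
  apply: star_step; last by constructor.
  by apply: at_root; right; left; exists f, ps, p; split => //; apply: h2; left.
- move=> o ss ps N F p hn IH hN; have [h1 h2] := incl_cat hN.
  apply: star_trans (@star_node_F2 _ _ Y (inr o) _ (map TVar ps) _) _.
    by apply: F2_map_both'; exact: IH h1.
  apply: star_step; last by constructor.
  by apply: at_root; right; right; left; exists o, ps, p; split => //; apply: h2; left.
- by constructor.
- move=> s ss p ps N Ns F Fs _ IH1 _ IH2 hN; have [h1 h2] := incl_cat hN; constructor; auto.
Qed.

Lemma norm_run_root (A Y : lta Ab) a q N F :
  (forall T, List.In T (delta A) -> List.In T (delta Y)) ->
  norm_root A a q N F -> incl_d N Y -> runs Y a q.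
Proof.
move=> hAY; case=> [p q'|l q'|f ss ps N' F' q' hn|o ss ps N' F' q' hn] hN.
- apply: star_step; last by constructor.
  by apply: at_root; right; right; right; exists p, q'; split => //; apply: hN; left.
- apply: star_step; last by constructor.
  apply: at_root; left; exists l, q', l; split; first by apply: hN; left.
  by split.
- have [h1 h2] := incl_cat hN.
  apply: star_trans (@star_node_F2 _ _ Y (inl f) _ (map TVar ps) _) _.
    by apply: F2_map_both'; exact: norm_run_list hAY _ _ _ _ hn h1.
  apply: star_step; last by constructor.
  by apply: at_root; right; left; exists f, ps, q'; split => //; apply: h2; left.
- have [h1 h2] := incl_cat hN.
  apply: star_trans (@star_node_F2 _ _ Y (inr o) _ (map TVar ps) _) _.
    by apply: F2_map_both'; exact: norm_run_list hAY _ _ _ _ hn h1.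
  apply: star_step; last by constructor.
  by apply: at_root; right; right; left; exists o, ps, q'; split => //; apply: h2; left.
Qed.

Lemma wfc_tsub (th : nat -> ct) (r : ct) :
  wfc r -> (forall x, x \in vars r -> wfc (th x)) -> wfc (tsub th r).
Proof.
elim/term_ind': r => [x|f rs IH|o rs IH|d] //= hw H.
- by apply: H; rewrite inE.
- move/andP: hw => [hs ha]; apply/andP; split; first by rewrite size_map.
  apply: all_In => c /in_map_iff' [r [<- hr]].
  apply: (proj1 (List.Forall_forall _ _) IH r hr); first exact: (all_In_inv ha).
  by move=> x hx; apply: H; apply/mem_flatten_vars; exists r.
- move/andP: hw => [hs ha]; apply/andP; split; first by rewrite size_map.
  apply: all_In => c /in_map_iff' [r [<- hr]].
  apply: (proj1 (List.Forall_forall _ _) IH r hr); first exact: (all_In_inv ha).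
  by move=> x hx; apply: H; apply/mem_flatten_vars; exists r.
Qed.

Lemma wfc_tsub_inv (th : nat -> ct) (r : ct) x :
  x \in vars r -> wfc (tsub th r) -> wfc (th x).
Proof.
elim/term_ind': r => [y|f rs IH|o rs IH|d] //=.
- by rewrite inE => /eqP ->.
- move=> /mem_flatten_vars [r [hr hx]] /andP [_ ha].
  apply: (proj1 (List.Forall_forall _ _) IH r hr hx).
  by apply: (all_In_inv ha); apply/in_map_iff'; exists r.
- move=> /mem_flatten_vars [r [hr hx]] /andP [_ ha].
  apply: (proj1 (List.Forall_forall _ _) IH r hr hx).
  by apply: (all_In_inv ha); apply/in_map_iff'; exists r.
Qed.

End Main3.

Section Mid.
Variables F K O : Type.
Variable arF : F -> nat.
Variable arOp : O -> nat.
Local Notation T := (term F K O).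

Lemma wf_mid_pas f (l1 : seq T) a b l2 : wf arF arOp (TPas f (l1 ++ a :: l2)) ->
  wf arF arOp b -> wf arF arOp (TPas f (l1 ++ b :: l2)).
Proof.
rewrite /= !size_cat /= !all_cat /= => /andP [hs /and3P [h1 _ h3]] hb.
by rewrite hs h1 hb h3.
Qed.
Lemma wf_mid_op o (l1 : seq T) a b l2 : wf arF arOp (TOp o (l1 ++ a :: l2)) ->
  wf arF arOp b -> wf arF arOp (TOp o (l1 ++ b :: l2)).
Proof.
rewrite /= !size_cat /= !all_cat /= => /andP [hs /and3P [h1 _ h3]] hb.
by rewrite hs h1 hb h3.
Qed.
Lemma wf_child_pas f (l1 : seq T) a l2 : wf arF arOp (TPas f (l1 ++ a :: l2)) -> wf arF arOp a.
Proof. by rewrite /= !all_cat /= => /andP [_ /and3P [_ h _]]. Qed.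
Lemma wf_child_op o (l1 : seq T) a l2 : wf arF arOp (TOp o (l1 ++ a :: l2)) -> wf arF arOp a.
Proof. by rewrite /= !all_cat /= => /andP [_ /and3P [_ h _]]. Qed.

Lemma ground_mid_pas f (l1 : seq T) a b l2 : ground (TPas f (l1 ++ a :: l2)) ->
  ground b -> ground (TPas f (l1 ++ b :: l2)).
Proof.
move=> /ground_TPas h hb; apply/ground_TPas => c /In_cat_iff [hc|[<-|hc]] //;
  apply: h; apply/In_cat_iff; [left|right; right] => //.
Qed.
Lemma ground_mid_op o (l1 : seq T) a b l2 : ground (TOp o (l1 ++ a :: l2)) ->
  ground b -> ground (TOp o (l1 ++ b :: l2)).
Proof.
move=> /ground_TOp h hb; apply/ground_TOp => c /In_cat_iff [hc|[<-|hc]] //;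
  apply: h; apply/In_cat_iff; [left|right; right] => //.
Qed.
Lemma ground_child_pas f (l1 : seq T) a l2 : ground (TPas f (l1 ++ a :: l2)) -> ground a.
Proof. by move=> /ground_TPas h; apply: h; apply: In_cat_mid. Qed.
Lemma ground_child_op o (l1 : seq T) a l2 : ground (TOp o (l1 ++ a :: l2)) -> ground a.
Proof. by move=> /ground_TOp h; apply: h; apply: In_cat_mid. Qed.
End Mid.

Section Core.
Variable Dm : domain.
Variable Ab : absdom Dm.
Local Notation Lam := (lat Ab).
Local Notation ct := (cterm Dm).
Local Notation atm := (aterm Ab).
Local Open Scope order_scope.
Variable R : seq (rule Dm).
Variable Solve : solver Ab.
Variables A1 A2 : lta Ab.
Hypothesis HR : left_linear_ctrs R.
Hypothesis HS : solver_ok R Solve.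
Hypothesis HCR : CR_step R Solve A1 A2.
Hypothesis HI : Inv A1.

Lemma CR_incl : forall T, List.In T (delta A1) -> List.In T (delta A2).
Proof.
case: HCR => cps [_ [_ [_ [_ [_ ->]]]]] T hT /=.
by apply/In_cat_iff; left.
Qed.

Lemma root_case s u t' q : rew_root R s u -> ground s -> wfc s ->
  cleq s t' -> ground t' -> wfa t' -> runs A1 t' q ->
  ground u /\ wfc u /\ exists b, ground b /\ wfa b /\ cleq u b /\ runs A2 b q.
Proof.
move=> [rl [th [hin [hth [-> [hcond ->]]]]]] hgs hws hc hg hw hr.
have [[hnv [hpo [hwl [hwr [hsub hcs]]]]] hul] := HR hin.
have [sg [hm hK]] := match_lhs hpo hul hc hg hw hr.
have hlang : forall x, x \in vars (lhs rl) -> lang_q A1 (sg x) (th x).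
  move=> x hx; split; first exact: hth x.
  split; first exact: wfc_tsub_inv hx hws.
  by have [b [gb [wb [cb rb]]]] := hK x hx; exists b.
have [s' [hs' hcv]] := HS.2 rl hin A1 q sg th hm hlang hcond.
have hH : forall x, x \in vars (rhs rl) -> Krel A1 (th x) (sval_term (s' x)).
  move=> x hx; have [h1 h2] := HS.1 sg A1 (conds rl) s' hs' x.
  case hxc: (x \in cvars (conds rl)).
  - have [l [d [e1 [e2 e3]]]] := hcv x hxc; rewrite e1 /=.
    exists (TCst l); split => //; split => //; split; last by constructor.
    exact: (@CleEval Dm Ab (th x) (TCst l) d l e2 (erefl _) e3).
  - by rewrite (h2 (negbT hxc)) /=; apply: hK; apply: hsub.
have hgu : ground (tsub th (rhs rl)) by apply: ground_tsub => x _; exact: hth x.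
have hwu : wfc (tsub th (rhs rl)).
  by apply: wfc_tsub => // x hx; apply: (wfc_tsub_inv (hsub x hx) hws).
split => //; split => //.
case: (classic (exists s'', aleq (inst (rhs rl) s') (inst (rhs rl) s'') /\
                            runs A1 (inst (rhs rl) s'') q)) => [[s'' [ha hr'']]|hno].
- have [b [gb [wb [cb rb]]]] := K_aleq hwu hH ha.
  exists b; split => //; split => //; split => //.
  by apply: run_mono CR_incl _; apply: star_trans rb hr''.
- have hom : in_omega Solve A1 rl q s' by exists sg.
  have hq : q \in st A1 := runs_st HI hg hr.
  have [i hi] := List.In_nth_error R rl hin.
  have [b [gb [wb [cb rb]]]] := K0 hwu hH.
  exists b; split => //; split => //; split => //.
  apply: star_trans (run_mono CR_incl rb) _.
  move: HCR => [cps [hc1 [hc2 [_ [_ [_ eB]]]]]].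
  have [c [hcin [e1 [e2 e3]]]] := hc2 i rl q s' hi hq hom.
  have [rl' [hrl' [_ [_ hn]]]] := hc1 c hcin.
  rewrite -e1 hi in hrl'; case: hrl' => erl; subst rl'.
  have einst : inst (rhs rl) (cp_sub c) = inst (rhs rl) s'.
    apply: tsub_ext => x; rewrite vars_tmap => hx.
    by rewrite (e3 rl hi x (hsub x hx)).
  have hinA2 : forall T, List.In T (cp_tr c ++ [:: TrE Ab (cp_new c) (cp_q c)]) -> List.In T (delta A2).
    move=> T hT; rewrite eB /=; apply/In_cat_iff; right; apply/In_flatten.
    exists (cp_tr c ++ [:: TrE Ab (cp_new c) (cp_q c)]); split => //.
    by apply/in_map_iff'; exists c.
  have hr1 : runs A2 (inst (rhs rl) s') (cp_new c).
    rewrite -einst; apply: norm_run_root CR_incl hn _ => T hT.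
    by apply: hinA2; apply/In_cat_iff; left.
  apply: star_trans hr1 _; apply: star_step; last by constructor.
  apply: at_root; right; right; right; exists (cp_new c), q; split => //.
  by apply: hinA2; apply/In_cat_iff; right; rewrite e2; left.
Qed.

Lemma redex_pas s u : rew_root R s u -> exists f ts, s = TPas f ts.
Proof.
move=> [rl [th [hin [_ [-> _]]]]].
have [[hnv [hpo _]] _] := HR hin.
by case: (lhs rl) hnv hpo => //= f ls _ _; exists f, (map (tsub th) ls).
Qed.

Lemma ceval_redex s u : at_pos (rew_root R) s u -> forall d, ceval s <> TCst d.
Proof.
elim=> [s0 u0 /redex_pas [f [ts ->]]|f l1 s0 u0 l2 _ IH|o l1 s0 u0 l2 _ IH] d //=.
case E: (all_some _) => [ds|] //; case: ifP => // _ [ed].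
have := proj1 (map_Some_Forall2 _ _ _) (all_some_inv E).
move=> /F2_map_inv /F2_cat_inv_l [m1 [m2 [_ [_ h2]]]]; inversion h2; subst.
by move: H1; case E2: (ceval s0) => //= [d0] _; apply: (IH d0).
Qed.

Lemma core_pos s u : at_pos (rew_root R) s u -> forall t' q, ground s -> wfc s ->
  cleq s t' -> ground t' -> wfa t' -> runs A1 t' q ->
  ground u /\ wfc u /\ exists b, ground b /\ wfa b /\ cleq u b /\ runs A2 b q.
Proof.
move=> hpos; elim: hpos => [s0 u0 h|f l1 s0 u0 l2 hp IH|o l1 s0 u0 l2 hp IH] t' q hgs hws hc hg hw hr.
- exact: root_case h hgs hws hc hg hw hr.
- inversion hc as [? ? d m hce|? ? ts' hF|]; subst; first by [].
  have [m1 [m2 [ets [hF1 hF2]]]] := F2_cat_inv_l hF; subst ts'.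
  inversion hF2 as [|? t0 ? m3 hc0 hF3]; subst.
  have [qs [hq1 hq2]] := run_decomp (k := inl f) hr erefl.
  have [qs1 [qs2 [eqs [hq11 hq12]]]] := F2_cat_inv_l hq1; subst qs.
  inversion hq12 as [|? p ? qs3 hr0 hq13]; subst.
  have [gu0 [wu0 [b0 [gb0 [wb0 [cb0 rb0]]]]]] :=
    IH t0 p (ground_child_pas hgs) (wf_child_pas hws) hc0 (ground_child_pas hg) (wf_child_pas hw) hr0.
  split; first exact: ground_mid_pas hgs gu0.
  split; first exact: wf_mid_pas hws wu0.
  exists (TPas f (m1 ++ b0 :: m3)); split; first exact: ground_mid_pas hg gb0.
  split; first exact: wf_mid_pas hw wb0.
  split; first by constructor; apply: F2_cat => //; constructor.
  apply: star_trans (run_mono CR_incl hq2).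
  rewrite map_cat /=; apply: (@star_node_F2 _ _ A2 (inl f)); apply: F2_cat.
    by apply: F2_map_both'; apply: Forall2_impl' hq11 => a b hab; apply: run_mono CR_incl hab.
  constructor => //; apply: F2_map_both'; apply: Forall2_impl' hq13 => a b hab; apply: run_mono CR_incl hab.
- inversion hc as [? ? d m hce hae hle|? ? ts' hF|? ? ts' hF]; subst.
    by have := ceval_redex (at_op o l1 l2 hp) hce.
  have [m1 [m2 [ets [hF1 hF2]]]] := F2_cat_inv_l hF; subst ts'.
  inversion hF2 as [|? t0 ? m3 hc0 hF3]; subst.
  have hN : aeval (TOp (AO o) (m1 ++ t0 :: m3)) = None.
    case E: aeval => [m|] //.
    by have [d [hd _]] := cleq_aeval hc E; have := ceval_redex (at_op o l1 l2 hp) hd.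
  have [qs [hq1 hq2]] := run_decomp (k := inr (AO o)) hr hN.
  have [qs1 [qs2 [eqs [hq11 hq12]]]] := F2_cat_inv_l hq1; subst qs.
  inversion hq12 as [|? p ? qs3 hr0 hq13]; subst.
  have [gu0 [wu0 [b0 [gb0 [wb0 [cb0 rb0]]]]]] :=
    IH t0 p (ground_child_op hgs) (wf_child_op hws) hc0 (ground_child_op hg) (wf_child_op hw) hr0.
  split; first exact: ground_mid_op hgs gu0.
  split; first exact: wf_mid_op hws wu0.
  exists (TOp (AO o) (m1 ++ b0 :: m3)); split; first exact: ground_mid_op hg gb0.
  split; first exact: wf_mid_op hw wb0.
  split; first by constructor; apply: F2_cat => //; constructor.
  apply: star_trans (run_mono CR_incl hq2).
  rewrite map_cat /=; apply: (@star_node_F2 _ _ A2 (inr (AO o))); apply: F2_cat.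
    by apply: F2_map_both'; apply: Forall2_impl' hq11 => a b hab; apply: run_mono CR_incl hab.
  constructor => //; apply: F2_map_both'; apply: Forall2_impl' hq13 => a b hab; apply: run_mono CR_incl hab.
Qed.

End Core.

Section Trans.
Variable Dm : domain.
Variable Ab : absdom Dm.
Local Notation Lam := (lat Ab).
Local Notation ct := (cterm Dm).
Local Notation atm := (aterm Ab).
Local Open Scope order_scope.

Definition transfer (X Y : lta Ab) : Prop :=
  forall b q, ground b -> runs X b q -> q \in fin X -> exists q', runs Y b q' /\ q' \in fin Y.

Lemma transfer_trans X Y Z : transfer X Y -> transfer Y Z -> transfer X Z.
Proof.
move=> h1 h2 b q gb hr hf; have [q1 [r1 f1]] := h1 b q gb hr hf.
exact: h2 b q1 gb r1 f1.
Qed.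

Lemma transfer_incl (X Y : lta Ab) :
  (forall T, List.In T (delta X) -> List.In T (delta Y)) ->
  (forall q, q \in fin X -> q \in fin Y) -> transfer X Y.
Proof. by move=> hd hf b q _ hr hq; exists q; split; [apply: run_mono hd hr|apply: hf]. Qed.

Lemma transfer_star (P : lta Ab -> lta Ab -> Prop) X Y :
  (forall X Y, P X Y -> transfer X Y) -> star P X Y -> transfer X Y.
Proof.
move=> h; elim=> [Z|x y z hxy _ IH]; first by move=> b q _ hr hf; exists q.
exact: transfer_trans (h _ _ hxy) IH.
Qed.

Lemma eval_add_transfer X Y : eval_add X Y -> transfer X Y.
Proof.
move=> [o [qs [q [ls [v [m [_ [_ [_ [_ [_ ->]]]]]]]]]]].
by apply: transfer_incl => // T hT /=; apply/In_cat_iff; left.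
Qed.

Lemma eval_clos_transfer X Y : eval_clos X Y -> transfer X Y.
Proof. by move=> [h _]; apply: transfer_star h; apply: eval_add_transfer. Qed.

Lemma CR_transfer R Solve X Y : CR_step R Solve X Y -> transfer X Y.
Proof.
move=> [cps [_ [_ [_ [_ [_ ->]]]]]].
by apply: transfer_incl => // T hT /=; apply/In_cat_iff; left.
Qed.

Definition ren (g : nat -> nat) (t : atm) : atm := tsub (fun x => TVar (g x)) t.

Lemma tsub_ground F K O (g : nat -> term F K O) t : ground t -> tsub g t = t.
Proof.
elim/term_ind': t => [x|f ts IH|o ts IH|k] //=.
- move=> /ground_TPas h; congr TPas; elim: ts IH h => //= a ts IHl IH h.
  inversion IH; subst; rewrite H1; last by apply: h; left.
  by rewrite IHl // => b hb; apply: h; right.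
- move=> /ground_TOp h; congr TOp; elim: ts IH h => //= a ts IHl IH h.
  inversion IH; subst; rewrite H1; last by apply: h; left.
  by rewrite IHl // => b hb; apply: h; right.
Qed.


Lemma run_ren (X : lta Ab) g s t : run X s t -> run (rename_lta g X) (ren g s) (ren g t).
Proof.
elim=> [u v hr|f l1 u v l2 _ IH|o l1 u v l2 _ IH].
- apply: at_root.
  case: hr => [[l [q [m [h1 [ha [hm ->]]]]]]|[[f [qs [q [h1 [-> ->]]]]]|[[o [qs [q [h1 [-> ->]]]]]|[p [q [h1 [-> ->]]]]]]].
  + left; exists l, (g q), m; split; first by apply/in_map_iff'; exists (TrL l q).
    by have [gu _] := aeval_gw ha; rewrite /ren tsub_ground.
  + right; left; exists f, (map g qs), (g q); split; first by apply/in_map_iff'; exists (TrF Ab f qs q).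
    by rewrite /ren /= -!map_comp.
  + right; right; left; exists o, (map g qs), (g q); split; first by apply/in_map_iff'; exists (TrO Ab o qs q).
    by rewrite /ren /= -!map_comp.
  + right; right; right; exists (g p), (g q); split => //.
    by apply/in_map_iff'; exists (TrE Ab p q).
- by rewrite /ren /= !map_cat /=; constructor.
- by rewrite /ren /= !map_cat /=; constructor.
Qed.

Lemma merge_step_transfer E X Y : merge_step E X Y -> transfer X Y.
Proof.
have H : forall g, transfer X (rename_lta g X).
  move=> g b q gb hr hf; exists (g q); split; last by apply: map_f.
  have := star_map (run_ren (X := X) g) hr; by rewrite /ren tsub_ground.
by move=> [q [q' [_ [->|->]]]]; apply: H.
Qed.

Lemma merge_nf_transfer E X Y : merge_nf E X Y -> transfer X Y.
Proof. by move=> [h _]; apply: transfer_star h; apply: merge_step_transfer. Qed.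

Lemma comp_transfer R E Solve X Y : comp_step R E Solve X Y -> transfer X Y.
Proof.
move=> [A1 [A2 [A3 [h1 [h2 [h3 h4]]]]]].
apply: transfer_trans (eval_clos_transfer h1) _.
apply: transfer_trans (CR_transfer h2) _.
apply: transfer_trans (merge_nf_transfer h3) _.
exact: eval_clos_transfer h4.
Qed.

Lemma lang_transfer X Y t : transfer X Y -> lang X t -> lang Y t.
Proof.
move=> h [q [hq [gt [wt [b [gb [wb [cb rb]]]]]]]].
have [q' [r' f']] := h b q gb rb hq.
by exists q'; split => //; split => //; split => //; exists b.
Qed.

End Trans.

Section InvS.
Variable Dm : domain.
Variable Ab : absdom Dm.
Local Notation Lam := (lat Ab).
Local Notation ct := (cterm Dm).
Local Notation atm := (aterm Ab).
Local Open Scope order_scope.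

Lemma is_lta_Inv (A : lta Ab) : is_lta A -> Inv A.
Proof.
move=> [_ h] T hT p; have := h T hT.
case: T {hT} => [f qs q|o qs q|l q|p' q] /=.
- by move=> [_ /andP [hq /allP hqs]]; rewrite inE => /orP [/eqP ->|/hqs].
- by move=> [_ /andP [hq /allP hqs]]; rewrite inE => /orP [/eqP ->|/hqs].
- by move=> hq; rewrite inE => /eqP ->.
- by move=> /andP [h1 h2]; rewrite !inE => /orP [] /eqP ->.
Qed.

Lemma eval_add_Inv (X Y : lta Ab) : Inv X -> eval_add X Y -> Inv Y.
Proof.
move=> hI [o [qs [q [ls [v [m [h1 [_ [_ [_ [_ ->]]]]]]]]]]] T /= /In_cat_iff [hT|[<-|[]]] p hp.
- exact: hI hT p hp.
- by move: hp; rewrite inE => /eqP ->; apply: (hI _ h1); rewrite inE eqxx.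
Qed.

Lemma eval_clos_Inv (X Y : lta Ab) : Inv X -> eval_clos X Y -> Inv Y.
Proof. by move=> hI [h _]; elim: h hI => // x y z hxy _ IH hI; apply: IH; apply: eval_add_Inv hxy. Qed.

Lemma eval_add_st (X Y : lta Ab) : eval_add X Y -> st Y = st X.
Proof. by move=> [o [qs [q [ls [v [m [_ [_ [_ [_ [_ ->]]]]]]]]]]]. Qed.

Lemma rename_Inv (X : lta Ab) g : Inv X -> Inv (rename_lta g X).
Proof.
move=> hI T' /= /in_map_iff' [T [<- hT]] p.
have H : forall r, r \in tr_states T -> g r \in map g (st X).
  by move=> r hr; apply: map_f; apply: hI hT r hr.
case: T hT H => [f qs q|o qs q|l q|p' q] _ H /=.
- rewrite inE => /orP [/eqP ->|/mapP [r hr ->]]; apply: H; rewrite inE ?eqxx ?hr ?orbT //.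
- rewrite inE => /orP [/eqP ->|/mapP [r hr ->]]; apply: H; rewrite inE ?eqxx ?hr ?orbT //.
- by rewrite inE => /eqP ->; apply: H; rewrite inE.
- by rewrite !inE => /orP [] /eqP ->; apply: H; rewrite !inE eqxx ?orbT.
Qed.

Lemma merge_nf_Inv E (X Y : lta Ab) : Inv X -> merge_nf E X Y -> Inv Y.
Proof.
move=> hI [h _]; elim: h hI => // x y z [q [q' [_ [->|->]]]] _ IH hI; apply: IH;
  exact: rename_Inv.
Qed.

Lemma norm_states (A : lta Ab) :
  forall a p N F, norm_sub A a p N F -> (forall v, v \in vars a -> v \in st A) ->
   (p \in st A \/ p \in F) /\ (forall T, List.In T N -> forall r, r \in tr_states T -> r \in st A \/ r \in F).
Proof.
apply: (norm_sub_mut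
  (P := fun a p N F _ => (forall v, v \in vars a -> v \in st A) ->
   (p \in st A \/ p \in F) /\ (forall T, List.In T N -> forall r, r \in tr_states T -> r \in st A \/ r \in F))
  (P0 := fun ss ps N F _ => (forall v, v \in flatten (map (@vars _ _ _) ss) -> v \in st A) ->
   (forall p, p \in ps -> p \in st A \/ p \in F) /\ (forall T, List.In T N -> forall r, r \in tr_states T -> r \in st A \/ r \in F))).
- by move=> p h; split => //; left; apply: h; rewrite inE.
- by move=> s p _ hp _ _; split => //; left.
- move=> l p _; split; first by right; rewrite inE.
  by move=> T [<-|[]] r; rewrite /= mem_seq1 => /eqP ->; right.
- move=> f ss ps N F p hn IH hv; have [h1 h2] := IH hv.
  split; first by right; rewrite inE eqxx.
  move=> T /In_cat_iff [hT|[<-|[]]] r.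
  + by move=> hr; case: (h2 T hT r hr) => hr'; [left|right; rewrite inE hr' orbT].
  + rewrite /= inE => /orP [/eqP ->|/h1 [hr'|hr']]; [right; rewrite inE eqxx //|left => //|right; rewrite inE hr' orbT //].
- move=> o ss ps N F p hn IH hv; have [h1 h2] := IH hv.
  split; first by right; rewrite inE eqxx.
  move=> T /In_cat_iff [hT|[<-|[]]] r.
  + by move=> hr; case: (h2 T hT r hr) => hr'; [left|right; rewrite inE hr' orbT].
  + rewrite /= inE => /orP [/eqP ->|/h1 [hr'|hr']]; [right; rewrite inE eqxx //|left => //|right; rewrite inE hr' orbT //].
- by move=> _; split.
- move=> s ss p ps N Ns F Fs _ IH1 _ IH2 hv.
  have hv1 : forall v, v \in vars s -> v \in st A by move=> v hv'; apply: hv; rewrite /= mem_cat hv'.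
  have hv2 : forall v, v \in flatten (map (@vars _ _ _) ss) -> v \in st A.
    by move=> v hv'; apply: hv; rewrite /= mem_cat hv' orbT.
  have [h1 h2] := IH1 hv1.
  have [h3 h4] := IH2 hv2.
  split.
  + move=> p'; rewrite inE => /orP [/eqP ->|/h3 [->|hp]]; auto.
    * by case: h1 => hr'; [left|right; rewrite mem_cat hr'].
    * by right; rewrite mem_cat hp orbT.
  + move=> T /In_cat_iff [hT|hT] r hr.
    * by case: (h2 T hT r hr) => hr'; [left|right; rewrite mem_cat hr'].
    * by case: (h4 T hT r hr) => [->|hF]; auto; right; rewrite mem_cat hF orbT.
Qed.

Lemma norm_states_list (A : lta Ab) :
  forall ss ps N F, norm_list A ss ps N F -> (forall v, v \in flatten (map (@vars _ _ _) ss) -> v \in st A) ->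
   (forall p, p \in ps -> p \in st A \/ p \in F) /\ (forall T, List.In T N -> forall r, r \in tr_states T -> r \in st A \/ r \in F).
Proof.
apply: (norm_list_mut
  (P := fun a p N F _ => (forall v, v \in vars a -> v \in st A) ->
   (p \in st A \/ p \in F) /\ (forall T, List.In T N -> forall r, r \in tr_states T -> r \in st A \/ r \in F))
  (P0 := fun ss ps N F _ => (forall v, v \in flatten (map (@vars _ _ _) ss) -> v \in st A) ->
   (forall p, p \in ps -> p \in st A \/ p \in F) /\ (forall T, List.In T N -> forall r, r \in tr_states T -> r \in st A \/ r \in F))).
- by move=> p h; split => //; left; apply: h; rewrite inE.
- by move=> s p _ hp _ _; split => //; left.
- move=> l p _; split; first by right; rewrite inE.
  by move=> T [<-|[]] r; rewrite /= mem_seq1 => /eqP ->; right.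
- move=> f ss ps N F p hn IH hv; have [h1 h2] := IH hv.
  split; first by right; rewrite inE eqxx.
  move=> T /In_cat_iff [hT|[<-|[]]] r.
  + by move=> hr; case: (h2 T hT r hr) => hr'; [left|right; rewrite inE hr' orbT].
  + rewrite /= inE => /orP [/eqP ->|/h1 [hr'|hr']]; [right; rewrite inE eqxx //|left => //|right; rewrite inE hr' orbT //].
- move=> o ss ps N F p hn IH hv; have [h1 h2] := IH hv.
  split; first by right; rewrite inE eqxx.
  move=> T /In_cat_iff [hT|[<-|[]]] r.
  + by move=> hr; case: (h2 T hT r hr) => hr'; [left|right; rewrite inE hr' orbT].
  + rewrite /= inE => /orP [/eqP ->|/h1 [hr'|hr']]; [right; rewrite inE eqxx //|left => //|right; rewrite inE hr' orbT //].
- by move=> _; split.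
- move=> s ss p ps N Ns F Fs _ IH1 _ IH2 hv.
  have hv1 : forall v, v \in vars s -> v \in st A by move=> v hv'; apply: hv; rewrite /= mem_cat hv'.
  have hv2 : forall v, v \in flatten (map (@vars _ _ _) ss) -> v \in st A.
    by move=> v hv'; apply: hv; rewrite /= mem_cat hv' orbT.
  have [h1 h2] := IH1 hv1.
  have [h3 h4] := IH2 hv2.
  split.
  + move=> p'; rewrite inE => /orP [/eqP ->|/h3 [->|hp]]; auto.
    * by case: h1 => hr'; [left|right; rewrite mem_cat hr'].
    * by right; rewrite mem_cat hp orbT.
  + move=> T /In_cat_iff [hT|hT] r hr.
    * by case: (h2 T hT r hr) => hr'; [left|right; rewrite mem_cat hr'].
    * by case: (h4 T hT r hr) => [->|hF]; auto; right; rewrite mem_cat hF orbT.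
Qed.


Lemma norm_root_states (A : lta Ab) a q' N F : norm_root A a q' N F ->
  (forall v, v \in vars a -> v \in st A) ->
  forall T, List.In T N -> forall r, r \in tr_states T -> [\/ r \in st A, r \in F | r = q'].
Proof.
case=> [p q|l q|f ss ps N' F' q hn|o ss ps N' F' q hn] hv T.
- move=> [<-|[]] r; rewrite /= !inE => /orP [/eqP ->|/eqP ->]; last by constructor 3.
  by constructor 1; apply: hv; rewrite inE.
- by move=> [<-|[]] r; rewrite /= inE => /eqP ->; constructor 3.
- have [k1 k2] := norm_states_list hn hv.
  move=> /In_cat_iff [hT|[<-|[]]] r.
  + by move=> hr; case: (k2 T hT r hr) => hr'; [constructor 1|constructor 2].
  + by rewrite /= inE => /orP [/eqP ->|/k1 [hr'|hr']]; [constructor 3|constructor 1|constructor 2].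
- have [k1 k2] := norm_states_list hn hv.
  move=> /In_cat_iff [hT|[<-|[]]] r.
  + by move=> hr; case: (k2 T hT r hr) => hr'; [constructor 1|constructor 2].
  + by rewrite /= inE => /orP [/eqP ->|/k1 [hr'|hr']]; [constructor 3|constructor 1|constructor 2].
Qed.


Lemma inst_vars_st R Solve (A : lta Ab) rl q s' :
  left_linear_ctrs R -> solver_ok R Solve -> List.In rl R -> Inv A -> q \in st A ->
  in_omega Solve A rl q s' -> forall p, p \in vars (inst (rhs rl) s') -> p \in st A.
Proof.
move=> HR HS hin HI hq [sg [hm [hs' _]]] p /vars_tsub [x [hx hp]].
rewrite vars_tmap in hx.
have [[_ [_ [_ [_ [hsub _]]]]] _] := HR rl hin.
have [h1 h2] := HS.1 sg A (conds rl) s' hs' x.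
case hxc: (x \in cvars (conds rl)).
  by have [l hl] := h1 hxc; rewrite hl in hp.
move: hp; rewrite (h2 (negbT hxc)) /= inE => /eqP ->.
have : sg x \in vars (tsub (fun x => TVar (sg x)) (abs Ab (lhs rl))).
  by apply/vars_tsub; exists x; rewrite vars_tmap (hsub x hx) inE.
by move/(star_vars_bwd HI hm) => [|//]; rewrite inE => /eqP ->.
Qed.

Lemma CR_Inv R Solve (A B : lta Ab) :
  left_linear_ctrs R -> solver_ok R Solve -> Inv A -> CR_step R Solve A B -> Inv B.
Proof.
move=> HR HS HI [cps [hc1 [hc2 [_ [_ [_ ->]]]]]] T /= /In_cat_iff [hT|/In_flatten [s0 [/in_map_iff' [c [<- hc]] hT]]] p hp.
  by rewrite mem_cat (HI T hT p hp).
have hfresh : forall r, r \in cp_new c :: cp_fresh c ->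
    r \in st A ++ flatten (map (fun c => cp_new c :: cp_fresh c) cps).
  move=> r hr; rewrite mem_cat; apply/orP; right; apply: In_mem; apply/In_flatten.
  exists (cp_new c :: cp_fresh c); split; last exact: mem_In.
  by apply/in_map_iff'; exists c.
have [rl [hrl [hq [hom hn]]]] := hc1 c hc.
have hin := List.nth_error_In R _ hrl.
move/In_cat_iff: hT => [hT|[eT|[]]].
  case: (norm_root_states hn (inst_vars_st HR HS hin HI hq hom) hT hp) => [h|h|->].
  - by rewrite mem_cat h.
  - by apply: hfresh; rewrite inE h orbT.
  - by apply: hfresh; rewrite inE eqxx.
move: hp; rewrite -eT /= !inE => /orP [/eqP ->|/eqP ->].
  by apply: hfresh; rewrite inE eqxx.
by rewrite mem_cat hq.
Qed.

Lemma comp_Inv R E Solve (X Y : lta Ab) :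
  left_linear_ctrs R -> solver_ok R Solve -> Inv X -> comp_step R E Solve X Y -> Inv Y.
Proof.
move=> HR HS HI [A1 [A2 [A3 [h1 [h2 [h3 h4]]]]]].
apply: eval_clos_Inv h4; apply: merge_nf_Inv h3; apply: CR_Inv HR HS _ h2.
exact: eval_clos_Inv h1.
Qed.

End InvS.

Section Final.
Variable Dm : domain.
Variable Ab : absdom Dm.
Local Notation ct := (cterm Dm).
Local Notation atm := (aterm Ab).

Lemma ceval_vars (t : ct) x : x \in vars (ceval t) -> x \in vars t.
Proof.
elim/term_ind': t => [y|f ts IH|o ts IH|d] //=.
- move/mem_flatten_vars => [u [/in_map_iff' [v [<- hv]] hx]].
  by apply/mem_flatten_vars; exists v; split => //; apply: (proj1 (List.Forall_forall _ _) IH v hv).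
- have H : x \in flatten (map (@vars _ _ _) (map (@ceval Dm) ts)) -> x \in flatten (map (@vars _ _ _) ts).
    move/mem_flatten_vars => [u [/in_map_iff' [v [<- hv]] hx]].
    by apply/mem_flatten_vars; exists v; split => //; apply: (proj1 (List.Forall_forall _ _) IH v hv).
  by case: all_some => [ds|]; [case: ifP|] => //.
Qed.

Lemma ceval_ground (t : ct) : ground t -> ground (ceval t).
Proof.
move=> /ground_iff h; apply/ground_iff => x; apply/negP => /ceval_vars hx.
by move: (h x); rewrite hx.
Qed.

Lemma ceval_wfc (t : ct) : wfc t -> wfc (ceval t).
Proof.
elim/term_ind': t => [y|f ts IH|o ts IH|d] //=.
- move=> /andP [hs ha]; apply/andP; split; first by rewrite size_map.
  apply: all_In => c /in_map_iff' [v [<- hv]].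
  exact: (proj1 (List.Forall_forall _ _) IH v hv (all_In_inv ha hv)).
- move=> /andP [hs ha].
  have H : wf (@arP Dm) (@arO Dm) (TOp o (map (@ceval Dm) ts)).
    apply/andP; split; first by rewrite size_map.
    apply: all_In => c /in_map_iff' [v [<- hv]].
    exact: (proj1 (List.Forall_forall _ _) IH v hv (all_In_inv ha hv)).
  by case: all_some => [ds|]; [case: ifP|].
Qed.

Lemma lta_eq_transfer (B X : lta Ab) : lta_eq B X -> transfer B X.
Proof.
move=> [_ [hf hd]]; apply: transfer_incl => [T /hd //|q]; by rewrite hf.
Qed.

Lemma closure R E Solve (Astar B : lta Ab) :
  left_linear_ctrs R -> solver_ok R Solve -> Inv Astar ->
  comp_step R E Solve Astar B -> lta_eq B Astar ->
  forall s t, lang Astar s -> ctrs_step R s t -> lang Astar t.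
Proof.
move=> HR HS HI [A1 [A2 [A3 [h1 [h2 [h3 h4]]]]]] heq s t
  [q [hq [gs [ws [t' [gt' [wt' [ct' rt']]]]]]]] [u [hpos ->]].
have HI1 : Inv A1 := eval_clos_Inv HI h1.
have [q1 [r1 f1]] := eval_clos_transfer h1 gt' rt' hq.
have [gu [wu [b [gb [wb [cb rb]]]]]] := core_pos HR HS h2 HI1 hpos gs ws ct' gt' wt' r1.
have f2 : q1 \in fin A2 by move: h2 => [cps [_ [_ [_ [_ [_ ->]]]]]].
have T : transfer A2 Astar.
  apply: transfer_trans (merge_nf_transfer h3) _.
  apply: transfer_trans (eval_clos_transfer h4) _.
  exact: lta_eq_transfer heq.
have [q' [r' f']] := T b q1 gb rb f2.
exists q'; split => //; split; first exact: ceval_ground.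
split; first exact: ceval_wfc.
by exists b; split => //; split => //; split => //; apply: cleq_ceval.
Qed.

End Final.

Theorem mainTheorem6 (Dm : domain) (Ab : absdom Dm)
    (R : seq (rule Dm)) (E : seq (approx_eq Dm)) (Solve : solver Ab)
    (A Astar : lta Ab) :
  left_linear_ctrs R ->
  linear_eqs E ->
  is_lta A ->
  solver_ok R Solve ->
  completion_terminates R E Solve A Astar ->
  forall t, reach R (lang A) t -> lang Astar t.
Proof.
move=> HR _ HA HS [k [As [h0 [hst [hk [B [hB heq]]]]]]] t [s [hs hstar]].
have H : forall n, n <= k -> Inv (As n) /\ transfer A (As n).
  elim=> [|n IH] hn.
    rewrite h0; split; first exact: is_lta_Inv.
    by move=> b q _ hr hq; exists q.
  have [I1 T1] := IH (ltnW hn).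
  split; first exact: comp_Inv HR HS I1 (hst n hn).
  exact: transfer_trans T1 (comp_transfer (hst n hn)).
have [HI HT] := H k (leqnn k); rewrite hk in HI HT.
have hl := lang_transfer HT hs.
elim: hstar hl => // x y z hxy _ IH hx.
by apply: IH; apply: closure HR HS HI hB heq _ _ hx hxy.
Qed.
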